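(* Let $\mathbf V$ be a monoid variety satisfying $xtx\approx xtx^2$. If $\mathbf V$ contains $\mathbb M_\lambda(ata^+)$ but does not contain $\mathbf K=\mathbb M_\lambda(bta^+b^+)$, then $\mathbf V$ satisfies $xty^2x\approx xty^2xyx$.
   Context: Words are elements of the free monoid $\mathfrak A^*$ over a countably infinite alphabet. Let $\tau_1$ be the congruence on $\mathfrak A^*$ generated by $a=aa$ for all letters $a$. Define $\mathbf u\,\lambda\,\mathbf v$ iff $\mathbf u\,\tau_1\,\mathbf v$, $\mathbf u,\mathbf v$ have the same set of multiple (occurring at least twice) letters, and for each multiple letter its first two occurrences are adjacent in $\mathbf u$ iff they are adjacent in $\mathbf v$. For $\lambda$-classes, $\mathtt v\le\mathtt u$ iff $\mathtt u=\mathtt p\mathtt v\mathtt s$ in $\mathfrak A^*/\lambda$. For a set $\mathtt W$ of $\lambda$-classes, $M_\lambda(\mathtt W)$ is the Rees quotient of $\mathfrak A^*/\lambda$ by the ideal of classes not $\le$ any element of $\mathtt W$, and $\mathbb M_\lambda(\mathtt W)$ is the monoid variety it generates. Here $ata^+$ denotes the $\lambda$-class $\{ata^k:k\ge1\}$ and $bta^+b^+$ denotes the $\lambda$-class $\{bta^kb^m:k\ge2,m\ge1\}$. *)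

(* Defs.v *)
From mathcomp Require Import all_boot.
Set Implicit Arguments. Unset Strict Implicit. Unset Printing Implicit Defensive.

Definition word := seq nat.
Definition identity := (word * word)%type.

Inductive tau1 : word -> word -> Prop :=
| tau1_refl u : tau1 u u
| tau1_sym u v : tau1 u v -> tau1 v u
| tau1_trans u v w : tau1 u v -> tau1 v w -> tau1 u w
| tau1_step (p s : word) (a : nat) : tau1 (p ++ a :: s) (p ++ a :: a :: s).

Definition multiple (w : word) (a : nat) : bool := 1 < count_mem a w.

(* the first two occurrences of a in w are adjacent (meaningful when a is
   multiple in w): the letter right after the first occurrence of a is a. *)
Definition first_two_adj (w : word) (a : nat) : bool :=
  nth a.+1 w (index a w).+1 == a.

Definition lam (u v : word) : Prop :=
  [/\ tau1 u v,
      (forall a, multiple u a = multiple v a) &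
      (forall a, multiple u a -> first_two_adj u a = first_two_adj v a)].

Definition lam_le (v u : word) : Prop :=
  exists p s : word, lam u (p ++ v ++ s).

(* A set W of lambda-classes is given by a list of representative words.
   [allowed W w]: the class of w is <= some element of W, i.e. it is not in
   the ideal factored out in the Rees quotient M_lambda(W). *)
Definition allowed (W : seq word) (w : word) : Prop :=
  exists2 x, x \in W & lam_le w x.

(* Substitutions into M_lambda(W): a letter is sent either to the zero
   (None) or to (the class of) a word (Some w).  The value of a word u
   under sigma is zero iff some letter of u goes to zero or the product
   word img sigma u is not allowed; otherwise it is the class of that word. *)
Definition img (sigma : nat -> option word) (u : word) : word :=
  flatten [seq odflt [::] (sigma x) | x <- u].

Definition nonzero (W : seq word) (sigma : nat -> option word) (u : word) : Prop :=
  (forall x, x \in u -> sigma x <> None) /\ allowed W (img sigma u).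

Definition Mlam_sat (W : seq word) (e : identity) : Prop :=
  forall sigma : nat -> option word,
    (~ nonzero W sigma e.1 /\ ~ nonzero W sigma e.2) \/
    [/\ nonzero W sigma e.1, nonzero W sigma e.2 & lam (img sigma e.1) (img sigma e.2)].

Record monoid := Monoid {
  mcarrier :> Type;
  mop : mcarrier -> mcarrier -> mcarrier;
  munit : mcarrier;
  mopA : forall x y z, mop x (mop y z) = mop (mop x y) z;
  mop1m : forall x, mop munit x = x;
  mopm1 : forall x, mop x munit = x }.

Definition meval (M : monoid) (sigma : nat -> M) (u : word) : M :=
  foldr (fun x acc => mop (sigma x) acc) (munit M) u.

Definition msat (M : monoid) (e : identity) : Prop :=
  forall sigma : nat -> M, meval sigma e.1 = meval sigma e.2.

(* A monoid variety V is represented as the class of all monoids satisfying a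
   set Sigma of identities (Birkhoff).  *)
Definition Vsat (Sigma : identity -> Prop) (e : identity) : Prop :=
  forall M : monoid, (forall f, Sigma f -> msat M f) -> msat M e.

Definition Vcontains_Mlam (Sigma : identity -> Prop) (W : seq word) : Prop :=
  forall f, Sigma f -> Mlam_sat W f.

(* Main.v *)
Require Import Defs.
From mathcomp Require Import all_boot.
From mathcomp Require Import zify.
From Stdlib Require Import Classical.
Set Implicit Arguments. Unset Strict Implicit. Unset Printing Implicit Defensive.

(* Proof outline:
   - from the failure of some identity u ~ v of Sigma in K we extract a substitution s0;
   - using M_lambda(ata) in V we pin down the shape of the images of u and v;
   - either the failure is spurious (contradiction) or V satisfies
     x t y^2 x ~ x t z for a word z in {x,y}^* with an x before a y and two y's;
   - normalising z modulo xtx ~ xtx^2 to one of finitely many forms, each case is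
     closed by an explicit (machine-found) equational derivation. *)

Fixpoint red (w : word) : word :=
  if w is a :: s then (let r := red s in if ohead r == Some a then r else a :: r) else [::].

Lemma ohead_red w : ohead (red w) = ohead w.
Proof. case: w => [|a s] //=. by case: eqP => //= ->. Qed.

Lemma red_cons_congr a u v : red u = red v -> red (a :: u) = red (a :: v).
Proof. by move=> /= ->. Qed.

Lemma red_cat_congr p u v : red u = red v -> red (p ++ u) = red (p ++ v).
Proof. elim: p => [|a p IH] //= H. by rewrite (IH H). Qed.

Lemma red_dup a s : red (a :: a :: s) = red (a :: s).
Proof.
rewrite [in LHS]/=. have -> : ohead (red (a :: s)) = Some a by rewrite ohead_red.
by rewrite eqxx.
Qed.

Lemma red_step p a s : red (p ++ a :: s) = red (p ++ a :: a :: s).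
Proof. apply: red_cat_congr. by rewrite red_dup. Qed.

Lemma tau1_red u v : tau1 u v -> red u = red v.
Proof.
elim.
- by [].
- by move=> x y _ ->.
- by move=> x y z _ -> _ ->.
- by move=> p s a; rewrite red_step.
Qed.

Lemma tau1_ohead u v : tau1 u v -> ohead u = ohead v.
Proof. by move/tau1_red=> H; rewrite -ohead_red H ohead_red. Qed.

Lemma tau1_cons a u v : tau1 u v -> tau1 (a :: u) (a :: v).
Proof.
elim.
- by move=> ?; apply: tau1_refl.
- by move=> ? ? _ H; apply: tau1_sym.
- by move=> ? ? ? _ H1 _ H2; apply: tau1_trans H2.
- move=> p s b. exact: (tau1_step (a :: p) s b).
Qed.

Lemma red_tau1 w : tau1 w (red w).
Proof.
elim: w => [|a s IH] /=; first exact: tau1_refl.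
apply: tau1_trans (tau1_cons a IH) _.
case: eqP => [|_]; last exact: tau1_refl.
case E: (red s) => [|b r] //= [->].
apply: tau1_sym. exact: (tau1_step [::] r a).
Qed.

Lemma red_eq_tau1 u v : red u = red v -> tau1 u v.
Proof.
move=> H. apply: tau1_trans (red_tau1 u) _. rewrite H. apply: tau1_sym. exact: red_tau1.
Qed.

Lemma mem_red w x : (x \in red w) = (x \in w).
Proof.
elim: w => [|a s IH] //=. case: eqP => [H|_].
- rewrite in_cons -IH. case: (red s) H => //= b r [->].
  by rewrite in_cons; case: eqP.
- by rewrite !in_cons IH.
Qed.

Lemma tau1_mem u v x : tau1 u v -> (x \in u) = (x \in v).
Proof. by move/tau1_red=> H; rewrite -mem_red H mem_red. Qed.

Lemma red_nil w : red w = [::] -> w = [::].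
Proof. case: w => //= a s. by case: eqP => //; case: (red s). Qed.

Lemma red_cons_inv w a r : red w = a :: r ->
  exists n w', [/\ w = nseq n.+1 a ++ w', red w' = r & ohead w' != Some a].
Proof.
elim: w a r => [|b s IH] a r //=. case: eqP => [Hs|Hs].
- move=> Er. rewrite Er in Hs. case: Hs => <-.
  have [n [w' [-> H1 H2]]] := IH _ _ Er. by exists n.+1, w'.
- case=> <- <-. exists 0, s. split => //. rewrite -ohead_red. exact/eqP.
Qed.

Lemma red_nseq a n w : red (nseq n.+1 a ++ w) = red (a :: w).
Proof.
elim: n => [|n IH] //. rewrite -[nseq n.+2 a ++ w]/(a :: (nseq n.+1 a ++ w)).
rewrite (red_cons_congr a IH). exact: red_dup.
Qed.

Lemma lam_refl w : lam w w.
Proof. split => //. exact: tau1_refl. Qed.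

Lemma lam_sym u v : lam u v -> lam v u.
Proof.
case=> H1 H2 H3; split; first exact: tau1_sym.
- by move=> a; rewrite H2.
- by move=> a Ha; rewrite H3 // H2.
Qed.

Lemma lam_trans u v w : lam u v -> lam v w -> lam u w.
Proof.
case=> H1 H2 H3 [G1 G2 G3]; split; first exact: tau1_trans G1.
- by move=> a; rewrite H2 G2.
- by move=> a Ha; rewrite H3 // G3 // -H2.
Qed.


Lemma count_nseq_cat (x : nat) n a (w : word) :
  count_mem x (nseq n a ++ w) = (a == x) * n + count_mem x w.
Proof. by rewrite count_cat count_nseq. Qed.

Lemma index_nseq_cat (x : nat) n a (w : word) : x != a -> index x (nseq n a ++ w) = n + index x w.
Proof. move=> H; elim: n => [|n IH] //=. by rewrite eq_sym (negbTE H) IH. Qed.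

Lemma nth_nseq_cat (d : nat) n a (w : word) i : nth d (nseq n a ++ w) (n + i) = nth d w i.
Proof. by elim: n. Qed.

Lemma red_blocks c d :
  red (nseq c 2 ++ nseq d 0) = nseq (0 < c) 2 ++ nseq (0 < d) 0.
Proof.
case: c => [|c]; case: d => [|d] //.
- by rewrite cat0s -[nseq d.+1 0]cats0 red_nseq.
- by rewrite cats0 -[nseq c.+1 2]cats0 red_nseq.
- rewrite red_nseq.
  have H : red (nseq d.+1 0) = red [:: 0] by rewrite -[nseq d.+1 0]cats0 red_nseq.
  by rewrite (red_cons_congr 2 H).
Qed.

Lemma lam_blocks pre c d c' d' :
  pre \in [:: [::]; [:: 1]; [:: 0; 1]] ->
  minn c 2 = minn c' 2 -> (d == 0) = (d' == 0) ->
  minn (count_mem 0 pre + d) 2 = minn (count_mem 0 pre + d') 2 ->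
  lam (pre ++ nseq c 2 ++ nseq d 0) (pre ++ nseq c' 2 ++ nseq d' 0).
Proof.
move=> Hpre Hc Hd H0; split.
- apply: red_eq_tau1; apply: red_cat_congr; rewrite !red_blocks.
  have -> : (0 < c) = (0 < c') by lia.
  by have -> : (0 < d) = (0 < d') by lia.
- move=> x; rewrite /multiple !count_cat !count_nseq.
  case: (x =P 2) => [->|n2]; [|case: (x =P 0) => [->|n0]].
  + move: Hpre; rewrite !inE => /or3P [] /eqP -> /=; lia.
  + move: H0; rewrite /=; lia.
  + have -> : pred1 x 2 = false by apply/eqP => /= H; apply: n2.
    have -> : pred1 x 0 = false by apply/eqP => /= H; apply: n0.
    by [].
- move=> x; rewrite /multiple !count_cat !count_nseq /first_two_adj.
  case: (x =P 2) => [->|n2]; [|case: (x =P 0) => [->|n0]].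
  + move: Hpre; rewrite !inE => /or3P [] /eqP -> /=;
    (case: c Hc => [|[|c]] /=; [lia|lia|]); case: c' => [|[|c']] /=; lia.
  + move: Hpre H0; rewrite !inE => /or3P [] /eqP -> /= H0 Hm.
    * have [d0 E0] : exists d0, d = d0.+2 by exists (d - 2); lia.
      have [d1 E1] : exists d1, d' = d1.+2 by exists (d' - 2); lia.
      rewrite E0 E1 !(index_nseq_cat _ _ (isT : 0 != 2)) /= -!addnS !nth_nseq_cat.
      by [].
    * have [d0 E0] : exists d0, d = d0.+2 by exists (d - 2); lia.
      have [d1 E1] : exists d1, d' = d1.+2 by exists (d' - 2); lia.
      rewrite E0 E1 /= !(index_nseq_cat _ _ (isT : 0 != 2)) /= -!addnS !nth_nseq_cat.
      by [].
    * by [].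
  + have -> : pred1 x 2 = false by apply/eqP => /= H; apply: n2.
    have -> : pred1 x 0 = false by apply/eqP => /= H; apply: n0.
    rewrite !mul0n !addn0. move: Hpre; rewrite !inE => /or3P [] /eqP -> //=.
    * by case: (1 == x).
    * have -> : (0 == x) = false by apply/eqP => H; apply: n0.
      by case: (1 == x).
Qed.


Definition X : word := [:: 0; 1; 2; 2; 0].
Definition ata : word := [:: 0; 1; 0].

Lemma lamX_blocks k m : lam X (0 :: 1 :: nseq k.+2 2 ++ nseq m.+1 0).
Proof.
apply: (lam_blocks (pre := [:: 0; 1]) (c := 2) (d := 1)) => //=; lia.
Qed.

Lemma lam_ata n : lam ata (0 :: 1 :: nseq n.+1 0).
Proof.
have := @lam_blocks [:: 0; 1] 0 1 0 n.+1 isT erefl erefl.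
by apply; rewrite /=; lia.
Qed.

Lemma lamX_shape w : lam X w -> exists k m, w = 0 :: 1 :: nseq k.+2 2 ++ nseq m.+1 0.
Proof.
case=> Ht Hm Ha. have Hr := tau1_red Ht.
have : red w = [:: 0; 1; 2; 0] by rewrite -Hr.
clear Ht Hr.
move/red_cons_inv => [a [w1 [Ew Hr1 _]]]; subst w.
move/red_cons_inv: Hr1 => [b [w2 [Ew Hr2 _]]]; subst w1.
move/red_cons_inv: Hr2 => [c [w3 [Ew Hr3 _]]]; subst w2.
move/red_cons_inv: Hr3 => [d [w4 [Ew /red_nil Ew4 _]]]; subst w3 w4.
rewrite cats0 in Hm Ha *.
have H1 := Hm 1. have H2 := Hm 2. have H0 := Ha 0 isT.
rewrite /multiple !count_nseq_cat /= !count_nseq /= in H1 H2.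
clear Hm Ha.
case: b => [|b] in H0 H1 H2 *; last by lia.
case: c => [|c] in H0 H1 H2 *; first by lia.
case: a => [|a] in H0 H1 H2 *.
- by exists c, d.
- by move: H0; rewrite /first_two_adj /=.
Qed.

Lemma allowed_nseq n : allowed [:: ata] (nseq n 0).
Proof.
exists ata; first by rewrite inE.
case: n => [|n].
- exists ata, [::]. exact: lam_refl.
- exists [:: 0; 1], [::]. rewrite cats0. exact: lam_ata.
Qed.

Lemma allowed_t n : allowed [:: ata] (1 :: nseq n 0).
Proof.
exists ata; first by rewrite inE.
case: n => [|n].
- exists [:: 0], [:: 0]. exact: lam_refl.
- exists [:: 0], [::]. rewrite cats0. exact: lam_ata.
Qed.

Lemma allowed_at n : allowed [:: ata] (0 :: 1 :: nseq n 0).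
Proof.
exists ata; first by rewrite inE.
case: n => [|n].
- exists [::], [:: 0]. exact: lam_refl.
- exists [::], [::]. rewrite cats0. exact: lam_ata.
Qed.


Definition imgw (th : nat -> word) (u : word) : word := flatten [seq th x | x <- u].
Definition thl (l : seq word) : nat -> word := fun n => nth [::] l n.

Section Eq.
Variable M : monoid.
Definition E (w1 w2 : word) : Prop := forall a : nat -> M, meval a w1 = meval a w2.

Lemma meval_cat (a : nat -> M) u v : meval a (u ++ v) = mop (meval a u) (meval a v).
Proof. elim: u => [|x u IH] /=; first by rewrite mop1m. by rewrite IH mopA. Qed.

Lemma meval_img (a : nat -> M) th u : meval a (imgw th u) = meval (fun n => meval a (th n)) u.
Proof. elim: u => [|x u IH] //=. by rewrite /imgw /= meval_cat -IH. Qed.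

Lemma E_refl w : E w w. Proof. by []. Qed.
Lemma E_sym w1 w2 : E w1 w2 -> E w2 w1. Proof. by move=> H a; rewrite H. Qed.
Lemma E_trans w2 w1 w3 : E w1 w2 -> E w2 w3 -> E w1 w3.
Proof. by move=> H1 H2 a; rewrite H1 H2. Qed.
Lemma E_ctx p s w1 w2 : E w1 w2 -> E (p ++ w1 ++ s) (p ++ w2 ++ s).
Proof. by move=> H a; rewrite !meval_cat H. Qed.
Lemma E_sub th w1 w2 : E w1 w2 -> E (imgw th w1) (imgw th w2).
Proof. by move=> H a; rewrite !meval_img H. Qed.
Lemma Estep L R p s l : E L R -> E (p ++ imgw (thl l) L ++ s) (p ++ imgw (thl l) R ++ s).
Proof. by move=> H; apply: E_ctx; apply: E_sub. Qed.
Lemma Estep' L R p s l : E L R -> E (p ++ imgw (thl l) R ++ s) (p ++ imgw (thl l) L ++ s).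
Proof. by move=> H; apply: E_sym; apply: Estep. Qed.
End Eq.

Lemma tr_e_x (M : monoid) (Hx : E M [:: 0; 1; 0] [:: 0; 1; 0; 0]) :
  E M [:: 0; 1; 0] [:: 0; 1; 0].
Proof. exact: E_refl. Qed.

Lemma tr_e_y (M : monoid) (Hx : E M [:: 0; 1; 0] [:: 0; 1; 0; 0]) :
  E M [:: 0; 1; 2] [:: 0; 1; 2].
Proof. exact: E_refl. Qed.

Lemma tr_x_x (M : monoid) (Hx : E M [:: 0; 1; 0] [:: 0; 1; 0; 0]) :
  E M [:: 0; 1; 0; 0] [:: 0; 1; 0].
Proof. exact: (Estep' [::] [::] [:: [:: 0]; [:: 1]] Hx). Qed.

Lemma tr_x_y (M : monoid) (Hx : E M [:: 0; 1; 0] [:: 0; 1; 0; 0]) :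
  E M [:: 0; 1; 0; 2] [:: 0; 1; 0; 2].
Proof. exact: E_refl. Qed.

Lemma tr_y_x (M : monoid) (Hx : E M [:: 0; 1; 0] [:: 0; 1; 0; 0]) :
  E M [:: 0; 1; 2; 0] [:: 0; 1; 2; 0].
Proof. exact: E_refl. Qed.

Lemma tr_y_y (M : monoid) (Hx : E M [:: 0; 1; 0] [:: 0; 1; 0; 0]) :
  E M [:: 0; 1; 2; 2] [:: 0; 1; 2; 2].
Proof. exact: E_refl. Qed.

Lemma tr_xy_x (M : monoid) (Hx : E M [:: 0; 1; 0] [:: 0; 1; 0; 0]) :
  E M [:: 0; 1; 0; 2; 0] [:: 0; 1; 0; 2; 0].
Proof. exact: E_refl. Qed.

Lemma tr_xy_y (M : monoid) (Hx : E M [:: 0; 1; 0] [:: 0; 1; 0; 0]) :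
  E M [:: 0; 1; 0; 2; 2] [:: 0; 1; 0; 2; 2].
Proof. exact: E_refl. Qed.

Lemma tr_yx_x (M : monoid) (Hx : E M [:: 0; 1; 0] [:: 0; 1; 0; 0]) :
  E M [:: 0; 1; 2; 0; 0] [:: 0; 1; 2; 0].
Proof. exact: (Estep' [::] [::] [:: [:: 0]; [:: 1; 2]] Hx). Qed.

Lemma tr_yx_y (M : monoid) (Hx : E M [:: 0; 1; 0] [:: 0; 1; 0; 0]) :
  E M [:: 0; 1; 2; 0; 2] [:: 0; 1; 2; 0; 2].
Proof. exact: E_refl. Qed.

Lemma tr_yy_x (M : monoid) (Hx : E M [:: 0; 1; 0] [:: 0; 1; 0; 0]) :
  E M [:: 0; 1; 2; 2; 0] [:: 0; 1; 2; 2; 0].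
Proof. exact: E_refl. Qed.

Lemma tr_yy_y (M : monoid) (Hx : E M [:: 0; 1; 0] [:: 0; 1; 0; 0]) :
  E M [:: 0; 1; 2; 2; 2] [:: 0; 1; 2; 2].
Proof. exact: (Estep' [:: 0; 1] [::] [:: [:: 2]; [::]] Hx). Qed.

Lemma tr_xyx_x (M : monoid) (Hx : E M [:: 0; 1; 0] [:: 0; 1; 0; 0]) :
  E M [:: 0; 1; 0; 2; 0; 0] [:: 0; 1; 0; 2; 0].
Proof. exact: (Estep' [:: 0; 1] [::] [:: [:: 0]; [:: 2]] Hx). Qed.

Lemma tr_xyx_y (M : monoid) (Hx : E M [:: 0; 1; 0] [:: 0; 1; 0; 0]) :
  E M [:: 0; 1; 0; 2; 0; 2] [:: 0; 1; 0; 2; 0; 2].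
Proof. exact: E_refl. Qed.

Lemma tr_xyy_x (M : monoid) (Hx : E M [:: 0; 1; 0] [:: 0; 1; 0; 0]) :
  E M [:: 0; 1; 0; 2; 2; 0] [:: 0; 1; 0; 2; 2; 0].
Proof. exact: E_refl. Qed.

Lemma tr_xyy_y (M : monoid) (Hx : E M [:: 0; 1; 0] [:: 0; 1; 0; 0]) :
  E M [:: 0; 1; 0; 2; 2; 2] [:: 0; 1; 0; 2; 2].
Proof. exact: (Estep' [:: 0; 1; 0] [::] [:: [:: 2]; [::]] Hx). Qed.

Lemma tr_yxy_x (M : monoid) (Hx : E M [:: 0; 1; 0] [:: 0; 1; 0; 0]) :
  E M [:: 0; 1; 2; 0; 2; 0] [:: 0; 1; 2; 0; 2; 0].
Proof. exact: E_refl. Qed.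

Lemma tr_yxy_y (M : monoid) (Hx : E M [:: 0; 1; 0] [:: 0; 1; 0; 0]) :
  E M [:: 0; 1; 2; 0; 2; 2] [:: 0; 1; 2; 0; 2].
Proof. exact: (Estep' [:: 0; 1] [::] [:: [:: 2]; [:: 0]] Hx). Qed.

Lemma tr_yyx_x (M : monoid) (Hx : E M [:: 0; 1; 0] [:: 0; 1; 0; 0]) :
  E M [:: 0; 1; 2; 2; 0; 0] [:: 0; 1; 2; 2; 0].
Proof. exact: (Estep' [::] [::] [:: [:: 0]; [:: 1; 2; 2]] Hx). Qed.

Lemma tr_yyx_y (M : monoid) (Hx : E M [:: 0; 1; 0] [:: 0; 1; 0; 0]) :
  E M [:: 0; 1; 2; 2; 0; 2] [:: 0; 1; 2; 2; 0; 2].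
Proof. exact: E_refl. Qed.

Lemma tr_xyxy_x (M : monoid) (Hx : E M [:: 0; 1; 0] [:: 0; 1; 0; 0]) :
  E M [:: 0; 1; 0; 2; 0; 2; 0] [:: 0; 1; 0; 2; 0; 2; 0].
Proof. exact: E_refl. Qed.

Lemma tr_xyxy_y (M : monoid) (Hx : E M [:: 0; 1; 0] [:: 0; 1; 0; 0]) :
  E M [:: 0; 1; 0; 2; 0; 2; 2] [:: 0; 1; 0; 2; 0; 2].
Proof. exact: (Estep' [:: 0; 1; 0] [::] [:: [:: 2]; [:: 0]] Hx). Qed.

Lemma tr_xyyx_x (M : monoid) (Hx : E M [:: 0; 1; 0] [:: 0; 1; 0; 0]) :
  E M [:: 0; 1; 0; 2; 2; 0; 0] [:: 0; 1; 0; 2; 2; 0].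
Proof. exact: (Estep' [:: 0; 1] [::] [:: [:: 0]; [:: 2; 2]] Hx). Qed.

Lemma tr_xyyx_y (M : monoid) (Hx : E M [:: 0; 1; 0] [:: 0; 1; 0; 0]) :
  E M [:: 0; 1; 0; 2; 2; 0; 2] [:: 0; 1; 0; 2; 2; 0; 2].
Proof. exact: E_refl. Qed.

Lemma tr_yxyx_x (M : monoid) (Hx : E M [:: 0; 1; 0] [:: 0; 1; 0; 0]) :
  E M [:: 0; 1; 2; 0; 2; 0; 0] [:: 0; 1; 2; 0; 2; 0].
Proof. exact: (Estep' [:: 0; 1; 2] [::] [:: [:: 0]; [:: 2]] Hx). Qed.

Lemma tr_yxyx_y (M : monoid) (Hx : E M [:: 0; 1; 0] [:: 0; 1; 0; 0]) :
  E M [:: 0; 1; 2; 0; 2; 0; 2] [:: 0; 1; 2; 0; 2; 0; 2].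
Proof. exact: E_refl. Qed.

Lemma tr_yyxy_x (M : monoid) (Hx : E M [:: 0; 1; 0] [:: 0; 1; 0; 0]) :
  E M [:: 0; 1; 2; 2; 0; 2; 0] [:: 0; 1; 2; 2; 0; 2; 0].
Proof. exact: E_refl. Qed.

Lemma tr_yyxy_y (M : monoid) (Hx : E M [:: 0; 1; 0] [:: 0; 1; 0; 0]) :
  E M [:: 0; 1; 2; 2; 0; 2; 2] [:: 0; 1; 2; 2; 0; 2].
Proof. exact: (Estep' [:: 0; 1; 2] [::] [:: [:: 2]; [:: 0]] Hx). Qed.

Lemma tr_xyxyx_x (M : monoid) (Hx : E M [:: 0; 1; 0] [:: 0; 1; 0; 0]) :
  E M [:: 0; 1; 0; 2; 0; 2; 0; 0] [:: 0; 1; 0; 2; 0; 2; 0].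
Proof. exact: (Estep' [:: 0; 1; 0; 2] [::] [:: [:: 0]; [:: 2]] Hx). Qed.

Lemma tr_xyxyx_y (M : monoid) (Hx : E M [:: 0; 1; 0] [:: 0; 1; 0; 0]) :
  E M [:: 0; 1; 0; 2; 0; 2; 0; 2] [:: 0; 1; 0; 2; 0; 2; 0; 2].
Proof. exact: E_refl. Qed.

Lemma tr_xyyxy_x (M : monoid) (Hx : E M [:: 0; 1; 0] [:: 0; 1; 0; 0]) :
  E M [:: 0; 1; 0; 2; 2; 0; 2; 0] [:: 0; 1; 0; 2; 2; 0; 2; 0].
Proof. exact: E_refl. Qed.

Lemma tr_xyyxy_y (M : monoid) (Hx : E M [:: 0; 1; 0] [:: 0; 1; 0; 0]) :
  E M [:: 0; 1; 0; 2; 2; 0; 2; 2] [:: 0; 1; 0; 2; 2; 0; 2].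
Proof. exact: (Estep' [:: 0; 1; 0; 2] [::] [:: [:: 2]; [:: 0]] Hx). Qed.

Lemma tr_yxyxy_x (M : monoid) (Hx : E M [:: 0; 1; 0] [:: 0; 1; 0; 0]) :
  E M [:: 0; 1; 2; 0; 2; 0; 2; 0] [:: 0; 1; 2; 0; 2; 0; 2; 0].
Proof. exact: E_refl. Qed.

Lemma tr_yxyxy_y (M : monoid) (Hx : E M [:: 0; 1; 0] [:: 0; 1; 0; 0]) :
  E M [:: 0; 1; 2; 0; 2; 0; 2; 2] [:: 0; 1; 2; 0; 2; 0; 2].
Proof. exact: (Estep' [:: 0; 1; 2; 0] [::] [:: [:: 2]; [:: 0]] Hx). Qed.

Lemma tr_yyxyx_x (M : monoid) (Hx : E M [:: 0; 1; 0] [:: 0; 1; 0; 0]) :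
  E M [:: 0; 1; 2; 2; 0; 2; 0; 0] [:: 0; 1; 2; 2; 0; 2; 0].
Proof. exact: (Estep' [:: 0; 1; 2; 2] [::] [:: [:: 0]; [:: 2]] Hx). Qed.

Lemma tr_yyxyx_y (M : monoid) (Hx : E M [:: 0; 1; 0] [:: 0; 1; 0; 0]) :
  E M [:: 0; 1; 2; 2; 0; 2; 0; 2] [:: 0; 1; 2; 2; 0; 2; 0; 2].
Proof. exact: E_refl. Qed.

Lemma tr_xyxyxy_x (M : monoid) (Hx : E M [:: 0; 1; 0] [:: 0; 1; 0; 0]) :
  E M [:: 0; 1; 0; 2; 0; 2; 0; 2; 0] [:: 0; 1; 0; 2; 0; 2; 0; 2; 0].
Proof. exact: E_refl. Qed.

Lemma tr_xyxyxy_y (M : monoid) (Hx : E M [:: 0; 1; 0] [:: 0; 1; 0; 0]) :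
  E M [:: 0; 1; 0; 2; 0; 2; 0; 2; 2] [:: 0; 1; 0; 2; 0; 2; 0; 2].
Proof. exact: (Estep' [:: 0; 1; 0; 2; 0] [::] [:: [:: 2]; [:: 0]] Hx). Qed.

Lemma tr_xyyxyx_x (M : monoid) (Hx : E M [:: 0; 1; 0] [:: 0; 1; 0; 0]) :
  E M [:: 0; 1; 0; 2; 2; 0; 2; 0; 0] [:: 0; 1; 0; 2; 2; 0; 2; 0].
Proof. exact: (Estep' [:: 0; 1; 0; 2; 2] [::] [:: [:: 0]; [:: 2]] Hx). Qed.

Lemma tr_xyyxyx_y (M : monoid) (Hx : E M [:: 0; 1; 0] [:: 0; 1; 0; 0]) :
  E M [:: 0; 1; 0; 2; 2; 0; 2; 0; 2] [:: 0; 1; 0; 2; 2; 0; 2; 0; 2].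
Proof. exact: E_refl. Qed.

Lemma tr_yxyxyx_x (M : monoid) (Hx : E M [:: 0; 1; 0] [:: 0; 1; 0; 0]) :
  E M [:: 0; 1; 2; 0; 2; 0; 2; 0; 0] [:: 0; 1; 2; 0; 2; 0; 2; 0].
Proof. exact: (Estep' [:: 0; 1; 2; 0; 2] [::] [:: [:: 0]; [:: 2]] Hx). Qed.

Lemma tr_yxyxyx_y (M : monoid) (Hx : E M [:: 0; 1; 0] [:: 0; 1; 0; 0]) :
  E M [:: 0; 1; 2; 0; 2; 0; 2; 0; 2] [:: 0; 1; 2; 0; 2; 0; 2].
Proof. exact: (Estep' [:: 0; 1; 2] [::] [:: [:: 0; 2]; [::]] Hx). Qed.

Lemma tr_yyxyxy_x (M : monoid) (Hx : E M [:: 0; 1; 0] [:: 0; 1; 0; 0]) :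
  E M [:: 0; 1; 2; 2; 0; 2; 0; 2; 0] [:: 0; 1; 2; 2; 0; 2; 0; 2; 0].
Proof. exact: E_refl. Qed.

Lemma tr_yyxyxy_y (M : monoid) (Hx : E M [:: 0; 1; 0] [:: 0; 1; 0; 0]) :
  E M [:: 0; 1; 2; 2; 0; 2; 0; 2; 2] [:: 0; 1; 2; 2; 0; 2; 0; 2].
Proof. exact: (Estep' [:: 0; 1; 2; 2; 0] [::] [:: [:: 2]; [:: 0]] Hx). Qed.

Lemma tr_xyxyxyx_x (M : monoid) (Hx : E M [:: 0; 1; 0] [:: 0; 1; 0; 0]) :
  E M [:: 0; 1; 0; 2; 0; 2; 0; 2; 0; 0] [:: 0; 1; 0; 2; 0; 2; 0; 2; 0].
Proof. exact: (Estep' [:: 0; 1; 0; 2; 0; 2] [::] [:: [:: 0]; [:: 2]] Hx). Qed.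

Lemma tr_xyxyxyx_y (M : monoid) (Hx : E M [:: 0; 1; 0] [:: 0; 1; 0; 0]) :
  E M [:: 0; 1; 0; 2; 0; 2; 0; 2; 0; 2] [:: 0; 1; 0; 2; 0; 2; 0; 2].
Proof. exact: (Estep' [:: 0; 1; 0; 2] [::] [:: [:: 0; 2]; [::]] Hx). Qed.

Lemma tr_xyyxyxy_x (M : monoid) (Hx : E M [:: 0; 1; 0] [:: 0; 1; 0; 0]) :
  E M [:: 0; 1; 0; 2; 2; 0; 2; 0; 2; 0] [:: 0; 1; 0; 2; 2; 0; 2; 0; 2; 0].
Proof. exact: E_refl. Qed.

Lemma tr_xyyxyxy_y (M : monoid) (Hx : E M [:: 0; 1; 0] [:: 0; 1; 0; 0]) :
  E M [:: 0; 1; 0; 2; 2; 0; 2; 0; 2; 2] [:: 0; 1; 0; 2; 2; 0; 2; 0; 2].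
Proof. exact: (Estep' [:: 0; 1; 0; 2; 2; 0] [::] [:: [:: 2]; [:: 0]] Hx). Qed.

Lemma tr_yyxyxyx_x (M : monoid) (Hx : E M [:: 0; 1; 0] [:: 0; 1; 0; 0]) :
  E M [:: 0; 1; 2; 2; 0; 2; 0; 2; 0; 0] [:: 0; 1; 2; 2; 0; 2; 0; 2; 0].
Proof. exact: (Estep' [:: 0; 1; 2; 2; 0; 2] [::] [:: [:: 0]; [:: 2]] Hx). Qed.

Lemma tr_yyxyxyx_y (M : monoid) (Hx : E M [:: 0; 1; 0] [:: 0; 1; 0; 0]) :
  E M [:: 0; 1; 2; 2; 0; 2; 0; 2; 0; 2] [:: 0; 1; 2; 2; 0; 2; 0; 2].
Proof. exact: (Estep' [:: 0; 1; 2; 2] [::] [:: [:: 0; 2]; [::]] Hx). Qed.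

Lemma tr_xyyxyxyx_x (M : monoid) (Hx : E M [:: 0; 1; 0] [:: 0; 1; 0; 0]) :
  E M [:: 0; 1; 0; 2; 2; 0; 2; 0; 2; 0; 0] [:: 0; 1; 0; 2; 2; 0; 2; 0; 2; 0].
Proof. exact: (Estep' [:: 0; 1; 0; 2; 2; 0; 2] [::] [:: [:: 0]; [:: 2]] Hx). Qed.

Lemma tr_xyyxyxyx_y (M : monoid) (Hx : E M [:: 0; 1; 0] [:: 0; 1; 0; 0]) :
  E M [:: 0; 1; 0; 2; 2; 0; 2; 0; 2; 0; 2] [:: 0; 1; 0; 2; 2; 0; 2; 0; 2].
Proof. exact: (Estep' [:: 0; 1; 0; 2; 2] [::] [:: [:: 0; 2]; [::]] Hx). Qed.
Lemma fin_xyy (M : monoid) (Hx : E M [:: 0; 1; 0] [:: 0; 1; 0; 0])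
  (HI : E M [:: 0; 1; 2; 2; 0] [:: 0; 1; 0; 2; 2]) : E M [:: 0; 1; 2; 2; 0] [:: 0; 1; 2; 2; 0; 2; 0].
Proof.
apply: (E_trans (w2 := [:: 0; 1; 0; 2; 2])); first exact: (Estep [::] [::] [:: [:: 0]; [:: 1]; [:: 2]] HI).
apply: (E_trans (w2 := [:: 0; 1; 0; 0; 2; 2])); first exact: (Estep [::] [:: 2; 2] [:: [:: 0]; [:: 1]] Hx).
apply: (E_trans (w2 := [:: 0; 1; 0; 2; 2; 0])); first exact: (Estep' [:: 0; 1] [::] [:: [:: 0]; [::]; [:: 2]] HI).
apply: (E_trans (w2 := [:: 0; 1; 0; 2; 2; 2; 0])); first exact: (Estep [:: 0; 1; 0] [:: 0] [:: [:: 2]; [::]] Hx).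
apply: (E_trans (w2 := [:: 0; 1; 2; 2; 0; 2; 0])); first exact: (Estep' [::] [:: 2; 0] [:: [:: 0]; [:: 1]; [:: 2]] HI).
exact: E_refl.
Qed.

Lemma fin_yxy (M : monoid) (Hx : E M [:: 0; 1; 0] [:: 0; 1; 0; 0])
  (HI : E M [:: 0; 1; 2; 2; 0] [:: 0; 1; 2; 0; 2]) : E M [:: 0; 1; 2; 2; 0] [:: 0; 1; 2; 2; 0; 2; 0].
Proof.
apply: (E_trans (w2 := [:: 0; 1; 2; 0; 2])); first exact: (Estep [::] [::] [:: [:: 0]; [:: 1]; [:: 2]] HI).
apply: (E_trans (w2 := [:: 0; 1; 2; 0; 0; 2])); first exact: (Estep [::] [:: 2] [:: [:: 0]; [:: 1; 2]] Hx).
apply: (E_trans (w2 := [:: 0; 1; 2; 0; 2; 0])); first exact: (Estep [:: 0; 1] [::] [:: [:: 2]; [::]; [:: 0]] HI).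
apply: (E_trans (w2 := [:: 0; 1; 2; 0; 2; 2; 0])); first exact: (Estep [:: 0; 1] [:: 0] [:: [:: 2]; [:: 0]] Hx).
apply: (E_trans (w2 := [:: 0; 1; 2; 2; 0; 2; 0])); first exact: (Estep' [::] [:: 2; 0] [:: [:: 0]; [:: 1]; [:: 2]] HI).
exact: E_refl.
Qed.

Lemma fin_xyxy (M : monoid) (Hx : E M [:: 0; 1; 0] [:: 0; 1; 0; 0])
  (HI : E M [:: 0; 1; 2; 2; 0] [:: 0; 1; 0; 2; 0; 2]) : E M [:: 0; 1; 2; 2; 0] [:: 0; 1; 2; 2; 0; 2; 0].
Proof.
apply: (E_trans (w2 := [:: 0; 1; 0; 2; 0; 2])); first exact: (Estep [::] [::] [:: [:: 0]; [:: 1]; [:: 2]] HI).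
apply: (E_trans (w2 := [:: 0; 1; 0; 2; 0; 0; 2])); first exact: (Estep [:: 0; 1] [:: 2] [:: [:: 0]; [:: 2]] Hx).
apply: (E_trans (w2 := [:: 0; 1; 0; 2; 0; 0; 2; 0; 2])); first exact: (Estep [:: 0; 1] [::] [:: [:: 0; 2]; [:: 0]] Hx).
apply: (E_trans (w2 := [:: 0; 1; 0; 2; 0; 2; 2; 0])); first exact: (Estep' [:: 0; 1; 0; 2] [::] [:: [:: 0]; [::]; [:: 2]] HI).
apply: (E_trans (w2 := [:: 0; 1; 2; 2; 0; 2; 0])); first exact: (Estep' [::] [:: 2; 0] [:: [:: 0]; [:: 1]; [:: 2]] HI).
exact: E_refl.
Qed.

Lemma fin_xyyx (M : monoid) (Hx : E M [:: 0; 1; 0] [:: 0; 1; 0; 0])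
  (HI : E M [:: 0; 1; 2; 2; 0] [:: 0; 1; 0; 2; 2; 0]) : E M [:: 0; 1; 2; 2; 0] [:: 0; 1; 2; 2; 0; 2; 0].
Proof.
apply: (E_trans (w2 := [:: 0; 1; 2; 2; 2; 0])); first exact: (Estep [:: 0; 1] [:: 0] [:: [:: 2]; [::]] Hx).
apply: (E_trans (w2 := [:: 0; 1; 2; 0; 2; 2; 0])); first exact: (Estep [::] [::] [:: [:: 0]; [:: 1; 2]; [:: 2]] HI).
apply: (E_trans (w2 := [:: 0; 1; 2; 0; 2; 2; 0; 2; 0])); first exact: (Estep [:: 0; 1] [::] [:: [:: 2; 0]; [:: 2]] Hx).
apply: (E_trans (w2 := [:: 0; 1; 2; 2; 2; 0; 2; 0])); first exact: (Estep' [::] [:: 2; 0] [:: [:: 0]; [:: 1; 2]; [:: 2]] HI).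
apply: (E_trans (w2 := [:: 0; 1; 2; 2; 0; 2; 0])); first exact: (Estep' [:: 0; 1] [:: 0; 2; 0] [:: [:: 2]; [::]] Hx).
exact: E_refl.
Qed.

Lemma fin_yxyx (M : monoid) (Hx : E M [:: 0; 1; 0] [:: 0; 1; 0; 0])
  (HI : E M [:: 0; 1; 2; 2; 0] [:: 0; 1; 2; 0; 2; 0]) : E M [:: 0; 1; 2; 2; 0] [:: 0; 1; 2; 2; 0; 2; 0].
Proof.
apply: (E_trans (w2 := [:: 0; 1; 2; 2; 2; 0])); first exact: (Estep [:: 0; 1] [:: 0] [:: [:: 2]; [::]] Hx).
apply: (E_trans (w2 := [:: 0; 1; 2; 2; 0; 2; 0])); first exact: (Estep [::] [::] [:: [:: 0]; [:: 1; 2]; [:: 2]] HI).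
exact: E_refl.
Qed.

Lemma fin_yyxy (M : monoid) (Hx : E M [:: 0; 1; 0] [:: 0; 1; 0; 0])
  (HI : E M [:: 0; 1; 2; 2; 0] [:: 0; 1; 2; 2; 0; 2]) : E M [:: 0; 1; 2; 2; 0] [:: 0; 1; 2; 2; 0; 2; 0].
Proof.
apply: (E_trans (w2 := [:: 0; 1; 2; 2; 0; 0])); first exact: (Estep [::] [::] [:: [:: 0]; [:: 1; 2; 2]] Hx).
apply: (E_trans (w2 := [:: 0; 1; 2; 2; 0; 2; 0])); first exact: (Estep [::] [:: 0] [:: [:: 0]; [:: 1]; [:: 2]] HI).
exact: E_refl.
Qed.

Lemma fin_xyxyx (M : monoid) (Hx : E M [:: 0; 1; 0] [:: 0; 1; 0; 0])
  (HI : E M [:: 0; 1; 2; 2; 0] [:: 0; 1; 0; 2; 0; 2; 0]) : E M [:: 0; 1; 2; 2; 0] [:: 0; 1; 2; 2; 0; 2; 0].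
Proof.
apply: (E_trans (w2 := [:: 0; 1; 0; 2; 0; 2; 0])); first exact: (Estep [::] [::] [:: [:: 0]; [:: 1]; [:: 2]] HI).
apply: (E_trans (w2 := [:: 0; 1; 0; 2; 0; 2; 0; 2; 0])); first exact: (Estep [:: 0; 1] [:: 0] [:: [:: 0; 2]; [::]] Hx).
apply: (E_trans (w2 := [:: 0; 1; 2; 2; 0; 2; 0])); first exact: (Estep' [::] [:: 2; 0] [:: [:: 0]; [:: 1]; [:: 2]] HI).
exact: E_refl.
Qed.

Lemma fin_xyyxy (M : monoid) (Hx : E M [:: 0; 1; 0] [:: 0; 1; 0; 0])
  (HI : E M [:: 0; 1; 2; 2; 0] [:: 0; 1; 0; 2; 2; 0; 2]) : E M [:: 0; 1; 2; 2; 0] [:: 0; 1; 2; 2; 0; 2; 0].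
Proof.
apply: (E_trans (w2 := [:: 0; 1; 0; 2; 2; 0; 2])); first exact: (Estep [::] [::] [:: [:: 0]; [:: 1]; [:: 2]] HI).
apply: (E_trans (w2 := [:: 0; 1; 0; 2; 2; 0; 0; 2])); first exact: (Estep [:: 0; 1] [:: 2] [:: [:: 0]; [:: 2; 2]] Hx).
apply: (E_trans (w2 := [:: 0; 1; 0; 2; 2; 0; 0; 2; 0; 2])); first exact: (Estep [:: 0; 1] [::] [:: [:: 0; 2]; [:: 2; 0]] Hx).
apply: (E_trans (w2 := [:: 0; 1; 0; 2; 2; 0; 0; 2; 2; 0; 2])); first exact: (Estep [:: 0; 1; 0; 2] [:: 0; 2] [:: [:: 2]; [:: 0; 0]] Hx).
apply: (E_trans (w2 := [:: 0; 1; 0; 2; 2; 0; 2; 2; 0])); first exact: (Estep' [:: 0; 1; 0; 2; 2] [::] [:: [:: 0]; [::]; [:: 2]] HI).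
apply: (E_trans (w2 := [:: 0; 1; 2; 2; 0; 2; 0])); first exact: (Estep' [::] [:: 2; 0] [:: [:: 0]; [:: 1]; [:: 2]] HI).
exact: E_refl.
Qed.

Lemma fin_yxyxy (M : monoid) (Hx : E M [:: 0; 1; 0] [:: 0; 1; 0; 0])
  (HI : E M [:: 0; 1; 2; 2; 0] [:: 0; 1; 2; 0; 2; 0; 2]) : E M [:: 0; 1; 2; 2; 0] [:: 0; 1; 2; 2; 0; 2; 0].
Proof.
apply: (E_trans (w2 := [:: 0; 1; 2; 2; 2; 0])); first exact: (Estep [:: 0; 1] [:: 0] [:: [:: 2]; [::]] Hx).
apply: (E_trans (w2 := [:: 0; 1; 2; 2; 0; 2; 0; 2])); first exact: (Estep [::] [::] [:: [:: 0]; [:: 1; 2]; [:: 2]] HI).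
apply: (E_trans (w2 := [:: 0; 1; 2; 2; 0; 2; 0; 2; 0; 2])); first exact: (Estep [:: 0; 1; 2; 2] [::] [:: [:: 0; 2]; [::]] Hx).
apply: (E_trans (w2 := [:: 0; 1; 2; 2; 0; 2; 2; 0])); first exact: (Estep' [:: 0; 1; 2; 2] [::] [:: [:: 0]; [::]; [:: 2]] HI).
apply: (E_trans (w2 := [:: 0; 1; 2; 2; 0; 2; 0])); first exact: (Estep' [:: 0; 1; 2] [:: 0] [:: [:: 2]; [:: 0]] Hx).
exact: E_refl.
Qed.

Lemma fin_yyxyx (M : monoid) (Hx : E M [:: 0; 1; 0] [:: 0; 1; 0; 0])
  (HI : E M [:: 0; 1; 2; 2; 0] [:: 0; 1; 2; 2; 0; 2; 0]) : E M [:: 0; 1; 2; 2; 0] [:: 0; 1; 2; 2; 0; 2; 0].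
Proof.
apply: (E_trans (w2 := [:: 0; 1; 2; 2; 0; 2; 0])); first exact: (Estep [::] [::] [:: [:: 0]; [:: 1]; [:: 2]] HI).
exact: E_refl.
Qed.

Lemma fin_xyxyxy (M : monoid) (Hx : E M [:: 0; 1; 0] [:: 0; 1; 0; 0])
  (HI : E M [:: 0; 1; 2; 2; 0] [:: 0; 1; 0; 2; 0; 2; 0; 2]) : E M [:: 0; 1; 2; 2; 0] [:: 0; 1; 2; 2; 0; 2; 0].
Proof.
apply: (E_trans (w2 := [:: 0; 1; 2; 2; 2; 0])); first exact: (Estep [:: 0; 1] [:: 0] [:: [:: 2]; [::]] Hx).
apply: (E_trans (w2 := [:: 0; 1; 2; 0; 2; 0; 2; 0; 2])); first exact: (Estep [::] [::] [:: [:: 0]; [:: 1; 2]; [:: 2]] HI).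
apply: (E_trans (w2 := [:: 0; 1; 2; 0; 0; 0; 2; 0; 2; 0; 2])); first exact: (Estep [::] [:: 2; 0; 2; 0; 2] [:: [:: 0]; [:: 1; 2]; [::]] HI).
apply: (E_trans (w2 := [:: 0; 1; 2; 0; 0; 2; 2; 0])); first exact: (Estep' [:: 0; 1; 2; 0] [::] [:: [:: 0]; [::]; [:: 2]] HI).
apply: (E_trans (w2 := [:: 0; 1; 2; 2; 0; 2; 0; 2; 0; 2; 0])); first exact: (Estep [:: 0; 1] [:: 2; 0] [:: [:: 2]; [::]; [:: 0]] HI).
apply: (E_trans (w2 := [:: 0; 1; 2; 2; 0; 2; 0])); first exact: (Estep' [:: 0; 1; 2] [::] [:: [:: 2; 0]; [::]; [::]] HI).
exact: E_refl.
Qed.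

Lemma fin_xyyxyx (M : monoid) (Hx : E M [:: 0; 1; 0] [:: 0; 1; 0; 0])
  (HI : E M [:: 0; 1; 2; 2; 0] [:: 0; 1; 0; 2; 2; 0; 2; 0]) : E M [:: 0; 1; 2; 2; 0] [:: 0; 1; 2; 2; 0; 2; 0].
Proof.
apply: (E_trans (w2 := [:: 0; 1; 0; 2; 2; 0; 2; 0])); first exact: (Estep [::] [::] [:: [:: 0]; [:: 1]; [:: 2]] HI).
apply: (E_trans (w2 := [:: 0; 1; 0; 2; 2; 0; 2; 0; 2; 0])); first exact: (Estep [:: 0; 1] [:: 0] [:: [:: 0; 2]; [:: 2]] Hx).
apply: (E_trans (w2 := [:: 0; 1; 2; 2; 0; 2; 0])); first exact: (Estep' [::] [:: 2; 0] [:: [:: 0]; [:: 1]; [:: 2]] HI).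
exact: E_refl.
Qed.

Lemma fin_yxyxyx (M : monoid) (Hx : E M [:: 0; 1; 0] [:: 0; 1; 0; 0])
  (HI : E M [:: 0; 1; 2; 2; 0] [:: 0; 1; 2; 0; 2; 0; 2; 0]) : E M [:: 0; 1; 2; 2; 0] [:: 0; 1; 2; 2; 0; 2; 0].
Proof.
apply: (E_trans (w2 := [:: 0; 1; 2; 2; 2; 0])); first exact: (Estep [:: 0; 1] [:: 0] [:: [:: 2]; [::]] Hx).
apply: (E_trans (w2 := [:: 0; 1; 2; 2; 0; 2; 0; 2; 0])); first exact: (Estep [::] [::] [:: [:: 0]; [:: 1; 2]; [:: 2]] HI).
apply: (E_trans (w2 := [:: 0; 1; 2; 2; 0; 2; 0])); first exact: (Estep' [:: 0; 1; 2] [::] [:: [:: 2; 0]; [::]] Hx).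
exact: E_refl.
Qed.

Lemma fin_yyxyxy (M : monoid) (Hx : E M [:: 0; 1; 0] [:: 0; 1; 0; 0])
  (HI : E M [:: 0; 1; 2; 2; 0] [:: 0; 1; 2; 2; 0; 2; 0; 2]) : E M [:: 0; 1; 2; 2; 0] [:: 0; 1; 2; 2; 0; 2; 0].
Proof.
apply: (E_trans (w2 := [:: 0; 1; 2; 2; 0; 2; 0; 2])); first exact: (Estep [::] [::] [:: [:: 0]; [:: 1]; [:: 2]] HI).
apply: (E_trans (w2 := [:: 0; 1; 2; 2; 0; 2; 0; 0; 2])); first exact: (Estep [:: 0; 1; 2; 2] [:: 2] [:: [:: 0]; [:: 2]] Hx).
apply: (E_trans (w2 := [:: 0; 1; 2; 2; 0; 2; 0; 0; 2; 0; 2; 0])); first exact: (Estep [:: 0; 1; 2; 2; 0] [::] [:: [:: 2]; [::]; [:: 0]] HI).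
apply: (E_trans (w2 := [:: 0; 1; 2; 2; 0; 2; 0; 2; 0; 2; 0])); first exact: (Estep' [:: 0; 1; 2; 2] [:: 2; 0; 2; 0] [:: [:: 0]; [:: 2]] Hx).
apply: (E_trans (w2 := [:: 0; 1; 2; 2; 0; 2; 0])); first exact: (Estep' [:: 0; 1; 2] [::] [:: [::]; [::]; [:: 2; 0]] HI).
exact: E_refl.
Qed.

Lemma fin_xyxyxyx (M : monoid) (Hx : E M [:: 0; 1; 0] [:: 0; 1; 0; 0])
  (HI : E M [:: 0; 1; 2; 2; 0] [:: 0; 1; 0; 2; 0; 2; 0; 2; 0]) : E M [:: 0; 1; 2; 2; 0] [:: 0; 1; 2; 2; 0; 2; 0].
Proof.
apply: (E_trans (w2 := [:: 0; 1; 0; 2; 0; 2; 0; 2; 0])); first exact: (Estep [::] [::] [:: [:: 0]; [:: 1]; [:: 2]] HI).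
apply: (E_trans (w2 := [:: 0; 1; 0; 2; 0; 2; 0; 2; 0; 2; 0])); first exact: (Estep [:: 0; 1] [:: 0; 2; 0] [:: [:: 0; 2]; [::]] Hx).
apply: (E_trans (w2 := [:: 0; 1; 2; 2; 0; 2; 0])); first exact: (Estep' [::] [:: 2; 0] [:: [:: 0]; [:: 1]; [:: 2]] HI).
exact: E_refl.
Qed.

Lemma fin_xyyxyxy (M : monoid) (Hx : E M [:: 0; 1; 0] [:: 0; 1; 0; 0])
  (HI : E M [:: 0; 1; 2; 2; 0] [:: 0; 1; 0; 2; 2; 0; 2; 0; 2]) : E M [:: 0; 1; 2; 2; 0] [:: 0; 1; 2; 2; 0; 2; 0].
Proof.
apply: (E_trans (w2 := [:: 0; 1; 0; 2; 2; 0; 2; 0; 2])); first exact: (Estep [::] [::] [:: [:: 0]; [:: 1]; [:: 2]] HI).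
apply: (E_trans (w2 := [:: 0; 1; 0; 2; 2; 0; 2; 0; 0; 2])); first exact: (Estep [:: 0; 1; 0; 2; 2] [:: 2] [:: [:: 0]; [:: 2]] Hx).
apply: (E_trans (w2 := [:: 0; 1; 0; 2; 2; 0; 2; 0; 2; 0; 0; 2])); first exact: (Estep [:: 0; 1] [:: 0; 0; 2] [:: [:: 0; 2]; [:: 2]] Hx).
apply: (E_trans (w2 := [:: 0; 1; 2; 2; 0; 0; 0; 2])); first exact: (Estep' [::] [:: 0; 0; 2] [:: [:: 0]; [:: 1]; [:: 2]] HI).
apply: (E_trans (w2 := [:: 0; 1; 2; 2; 0; 2; 0; 0; 2; 0; 2; 0])); first exact: (Estep [:: 0; 1; 2] [::] [:: [:: 2]; [:: 0]; [:: 0]] HI).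
apply: (E_trans (w2 := [:: 0; 1; 2; 2; 0; 2; 0; 2; 0; 2; 0])); first exact: (Estep' [:: 0; 1; 2; 2] [:: 2; 0; 2; 0] [:: [:: 0]; [:: 2]] Hx).
apply: (E_trans (w2 := [:: 0; 1; 2; 2; 0; 2; 0])); first exact: (Estep' [:: 0; 1; 2] [::] [:: [::]; [::]; [:: 2; 0]] HI).
exact: E_refl.
Qed.

Lemma fin_yyxyxyx (M : monoid) (Hx : E M [:: 0; 1; 0] [:: 0; 1; 0; 0])
  (HI : E M [:: 0; 1; 2; 2; 0] [:: 0; 1; 2; 2; 0; 2; 0; 2; 0]) : E M [:: 0; 1; 2; 2; 0] [:: 0; 1; 2; 2; 0; 2; 0].
Proof.
apply: (E_trans (w2 := [:: 0; 1; 2; 2; 0; 2; 0; 2; 0])); first exact: (Estep [::] [::] [:: [:: 0]; [:: 1]; [:: 2]] HI).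
apply: (E_trans (w2 := [:: 0; 1; 2; 2; 0; 2; 0])); first exact: (Estep' [:: 0; 1; 2] [::] [:: [:: 2; 0]; [::]] Hx).
exact: E_refl.
Qed.

Lemma fin_xyyxyxyx (M : monoid) (Hx : E M [:: 0; 1; 0] [:: 0; 1; 0; 0])
  (HI : E M [:: 0; 1; 2; 2; 0] [:: 0; 1; 0; 2; 2; 0; 2; 0; 2; 0]) : E M [:: 0; 1; 2; 2; 0] [:: 0; 1; 2; 2; 0; 2; 0].
Proof.
apply: (E_trans (w2 := [:: 0; 1; 0; 2; 2; 0; 2; 0; 2; 0])); first exact: (Estep [::] [::] [:: [:: 0]; [:: 1]; [:: 2]] HI).
apply: (E_trans (w2 := [:: 0; 1; 0; 2; 2; 0; 2; 0; 2; 0; 2; 0])); first exact: (Estep [:: 0; 1; 0; 2; 2] [:: 0] [:: [:: 0; 2]; [::]] Hx).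
apply: (E_trans (w2 := [:: 0; 1; 2; 2; 0; 2; 0])); first exact: (Estep' [::] [:: 2; 0] [:: [:: 0]; [:: 1]; [:: 2]] HI).
exact: E_refl.
Qed.
Definition states : seq word := [:: [::]; [:: 0]; [:: 2]; [:: 0; 2]; [:: 2; 0]; [:: 2; 2]; [:: 0; 2; 0]; [:: 0; 2; 2]; [:: 2; 0; 2]; [:: 2; 2; 0]; [:: 0; 2; 0; 2]; [:: 0; 2; 2; 0]; [:: 2; 0; 2; 0]; [:: 2; 2; 0; 2]; [:: 0; 2; 0; 2; 0]; [:: 0; 2; 2; 0; 2]; [:: 2; 0; 2; 0; 2]; [:: 2; 2; 0; 2; 0]; [:: 0; 2; 0; 2; 0; 2]; [:: 0; 2; 2; 0; 2; 0]; [:: 2; 0; 2; 0; 2; 0]; [:: 2; 2; 0; 2; 0; 2]; [:: 0; 2; 0; 2; 0; 2; 0]; [:: 0; 2; 2; 0; 2; 0; 2]; [:: 2; 2; 0; 2; 0; 2; 0]; [:: 0; 2; 2; 0; 2; 0; 2; 0]].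

Definition fins : seq word := [:: [:: 0; 2; 2]; [:: 2; 0; 2]; [:: 0; 2; 0; 2]; [:: 0; 2; 2; 0]; [:: 2; 0; 2; 0]; [:: 2; 2; 0; 2]; [:: 0; 2; 0; 2; 0]; [:: 0; 2; 2; 0; 2]; [:: 2; 0; 2; 0; 2]; [:: 2; 2; 0; 2; 0]; [:: 0; 2; 0; 2; 0; 2]; [:: 0; 2; 2; 0; 2; 0]; [:: 2; 0; 2; 0; 2; 0]; [:: 2; 2; 0; 2; 0; 2]; [:: 0; 2; 0; 2; 0; 2; 0]; [:: 0; 2; 2; 0; 2; 0; 2]; [:: 2; 2; 0; 2; 0; 2; 0]; [:: 0; 2; 2; 0; 2; 0; 2; 0]].

Definition ttable : seq (word * nat * word) := [:: ([::], 0, [:: 0]);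
  ([::], 2, [:: 2]);
  ([:: 0], 0, [:: 0]);
  ([:: 0], 2, [:: 0; 2]);
  ([:: 2], 0, [:: 2; 0]);
  ([:: 2], 2, [:: 2; 2]);
  ([:: 0; 2], 0, [:: 0; 2; 0]);
  ([:: 0; 2], 2, [:: 0; 2; 2]);
  ([:: 2; 0], 0, [:: 2; 0]);
  ([:: 2; 0], 2, [:: 2; 0; 2]);
  ([:: 2; 2], 0, [:: 2; 2; 0]);
  ([:: 2; 2], 2, [:: 2; 2]);
  ([:: 0; 2; 0], 0, [:: 0; 2; 0]);
  ([:: 0; 2; 0], 2, [:: 0; 2; 0; 2]);
  ([:: 0; 2; 2], 0, [:: 0; 2; 2; 0]);
  ([:: 0; 2; 2], 2, [:: 0; 2; 2]);
  ([:: 2; 0; 2], 0, [:: 2; 0; 2; 0]);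
  ([:: 2; 0; 2], 2, [:: 2; 0; 2]);
  ([:: 2; 2; 0], 0, [:: 2; 2; 0]);
  ([:: 2; 2; 0], 2, [:: 2; 2; 0; 2]);
  ([:: 0; 2; 0; 2], 0, [:: 0; 2; 0; 2; 0]);
  ([:: 0; 2; 0; 2], 2, [:: 0; 2; 0; 2]);
  ([:: 0; 2; 2; 0], 0, [:: 0; 2; 2; 0]);
  ([:: 0; 2; 2; 0], 2, [:: 0; 2; 2; 0; 2]);
  ([:: 2; 0; 2; 0], 0, [:: 2; 0; 2; 0]);
  ([:: 2; 0; 2; 0], 2, [:: 2; 0; 2; 0; 2]);
  ([:: 2; 2; 0; 2], 0, [:: 2; 2; 0; 2; 0]);
  ([:: 2; 2; 0; 2], 2, [:: 2; 2; 0; 2]);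
  ([:: 0; 2; 0; 2; 0], 0, [:: 0; 2; 0; 2; 0]);
  ([:: 0; 2; 0; 2; 0], 2, [:: 0; 2; 0; 2; 0; 2]);
  ([:: 0; 2; 2; 0; 2], 0, [:: 0; 2; 2; 0; 2; 0]);
  ([:: 0; 2; 2; 0; 2], 2, [:: 0; 2; 2; 0; 2]);
  ([:: 2; 0; 2; 0; 2], 0, [:: 2; 0; 2; 0; 2; 0]);
  ([:: 2; 0; 2; 0; 2], 2, [:: 2; 0; 2; 0; 2]);
  ([:: 2; 2; 0; 2; 0], 0, [:: 2; 2; 0; 2; 0]);
  ([:: 2; 2; 0; 2; 0], 2, [:: 2; 2; 0; 2; 0; 2]);
  ([:: 0; 2; 0; 2; 0; 2], 0, [:: 0; 2; 0; 2; 0; 2; 0]);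
  ([:: 0; 2; 0; 2; 0; 2], 2, [:: 0; 2; 0; 2; 0; 2]);
  ([:: 0; 2; 2; 0; 2; 0], 0, [:: 0; 2; 2; 0; 2; 0]);
  ([:: 0; 2; 2; 0; 2; 0], 2, [:: 0; 2; 2; 0; 2; 0; 2]);
  ([:: 2; 0; 2; 0; 2; 0], 0, [:: 2; 0; 2; 0; 2; 0]);
  ([:: 2; 0; 2; 0; 2; 0], 2, [:: 2; 0; 2; 0; 2]);
  ([:: 2; 2; 0; 2; 0; 2], 0, [:: 2; 2; 0; 2; 0; 2; 0]);
  ([:: 2; 2; 0; 2; 0; 2], 2, [:: 2; 2; 0; 2; 0; 2]);
  ([:: 0; 2; 0; 2; 0; 2; 0], 0, [:: 0; 2; 0; 2; 0; 2; 0]);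
  ([:: 0; 2; 0; 2; 0; 2; 0], 2, [:: 0; 2; 0; 2; 0; 2]);
  ([:: 0; 2; 2; 0; 2; 0; 2], 0, [:: 0; 2; 2; 0; 2; 0; 2; 0]);
  ([:: 0; 2; 2; 0; 2; 0; 2], 2, [:: 0; 2; 2; 0; 2; 0; 2]);
  ([:: 2; 2; 0; 2; 0; 2; 0], 0, [:: 2; 2; 0; 2; 0; 2; 0]);
  ([:: 2; 2; 0; 2; 0; 2; 0], 2, [:: 2; 2; 0; 2; 0; 2]);
  ([:: 0; 2; 2; 0; 2; 0; 2; 0], 0, [:: 0; 2; 2; 0; 2; 0; 2; 0]);
  ([:: 0; 2; 2; 0; 2; 0; 2; 0], 2, [:: 0; 2; 2; 0; 2; 0; 2])].

Lemma trans_all (M : monoid) (Hx : E M [:: 0; 1; 0] [:: 0; 1; 0; 0]) s c t :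
  (s, c, t) \in ttable -> E M (0 :: 1 :: rcons s c) (0 :: 1 :: t).
Proof.
rewrite /ttable !inE.
case/orP => [/eqP [-> -> ->]|]; first exact: (tr_e_x Hx).
case/orP => [/eqP [-> -> ->]|]; first exact: (tr_e_y Hx).
case/orP => [/eqP [-> -> ->]|]; first exact: (tr_x_x Hx).
case/orP => [/eqP [-> -> ->]|]; first exact: (tr_x_y Hx).
case/orP => [/eqP [-> -> ->]|]; first exact: (tr_y_x Hx).
case/orP => [/eqP [-> -> ->]|]; first exact: (tr_y_y Hx).
case/orP => [/eqP [-> -> ->]|]; first exact: (tr_xy_x Hx).
case/orP => [/eqP [-> -> ->]|]; first exact: (tr_xy_y Hx).
case/orP => [/eqP [-> -> ->]|]; first exact: (tr_yx_x Hx).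
case/orP => [/eqP [-> -> ->]|]; first exact: (tr_yx_y Hx).
case/orP => [/eqP [-> -> ->]|]; first exact: (tr_yy_x Hx).
case/orP => [/eqP [-> -> ->]|]; first exact: (tr_yy_y Hx).
case/orP => [/eqP [-> -> ->]|]; first exact: (tr_xyx_x Hx).
case/orP => [/eqP [-> -> ->]|]; first exact: (tr_xyx_y Hx).
case/orP => [/eqP [-> -> ->]|]; first exact: (tr_xyy_x Hx).
case/orP => [/eqP [-> -> ->]|]; first exact: (tr_xyy_y Hx).
case/orP => [/eqP [-> -> ->]|]; first exact: (tr_yxy_x Hx).
case/orP => [/eqP [-> -> ->]|]; first exact: (tr_yxy_y Hx).
case/orP => [/eqP [-> -> ->]|]; first exact: (tr_yyx_x Hx).
case/orP => [/eqP [-> -> ->]|]; first exact: (tr_yyx_y Hx).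
case/orP => [/eqP [-> -> ->]|]; first exact: (tr_xyxy_x Hx).
case/orP => [/eqP [-> -> ->]|]; first exact: (tr_xyxy_y Hx).
case/orP => [/eqP [-> -> ->]|]; first exact: (tr_xyyx_x Hx).
case/orP => [/eqP [-> -> ->]|]; first exact: (tr_xyyx_y Hx).
case/orP => [/eqP [-> -> ->]|]; first exact: (tr_yxyx_x Hx).
case/orP => [/eqP [-> -> ->]|]; first exact: (tr_yxyx_y Hx).
case/orP => [/eqP [-> -> ->]|]; first exact: (tr_yyxy_x Hx).
case/orP => [/eqP [-> -> ->]|]; first exact: (tr_yyxy_y Hx).
case/orP => [/eqP [-> -> ->]|]; first exact: (tr_xyxyx_x Hx).
case/orP => [/eqP [-> -> ->]|]; first exact: (tr_xyxyx_y Hx).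
case/orP => [/eqP [-> -> ->]|]; first exact: (tr_xyyxy_x Hx).
case/orP => [/eqP [-> -> ->]|]; first exact: (tr_xyyxy_y Hx).
case/orP => [/eqP [-> -> ->]|]; first exact: (tr_yxyxy_x Hx).
case/orP => [/eqP [-> -> ->]|]; first exact: (tr_yxyxy_y Hx).
case/orP => [/eqP [-> -> ->]|]; first exact: (tr_yyxyx_x Hx).
case/orP => [/eqP [-> -> ->]|]; first exact: (tr_yyxyx_y Hx).
case/orP => [/eqP [-> -> ->]|]; first exact: (tr_xyxyxy_x Hx).
case/orP => [/eqP [-> -> ->]|]; first exact: (tr_xyxyxy_y Hx).
case/orP => [/eqP [-> -> ->]|]; first exact: (tr_xyyxyx_x Hx).
case/orP => [/eqP [-> -> ->]|]; first exact: (tr_xyyxyx_y Hx).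
case/orP => [/eqP [-> -> ->]|]; first exact: (tr_yxyxyx_x Hx).
case/orP => [/eqP [-> -> ->]|]; first exact: (tr_yxyxyx_y Hx).
case/orP => [/eqP [-> -> ->]|]; first exact: (tr_yyxyxy_x Hx).
case/orP => [/eqP [-> -> ->]|]; first exact: (tr_yyxyxy_y Hx).
case/orP => [/eqP [-> -> ->]|]; first exact: (tr_xyxyxyx_x Hx).
case/orP => [/eqP [-> -> ->]|]; first exact: (tr_xyxyxyx_y Hx).
case/orP => [/eqP [-> -> ->]|]; first exact: (tr_xyyxyxy_x Hx).
case/orP => [/eqP [-> -> ->]|]; first exact: (tr_xyyxyxy_y Hx).
case/orP => [/eqP [-> -> ->]|]; first exact: (tr_yyxyxyx_x Hx).
case/orP => [/eqP [-> -> ->]|]; first exact: (tr_yyxyxyx_y Hx).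
case/orP => [/eqP [-> -> ->]|]; first exact: (tr_xyyxyxyx_x Hx).
move=> /eqP [-> -> ->]; exact: (tr_xyyxyxyx_y Hx).
Qed.

Lemma fin_all (M : monoid) (Hx : E M [:: 0; 1; 0] [:: 0; 1; 0; 0]) s :
  s \in fins -> E M [:: 0; 1; 2; 2; 0] (0 :: 1 :: s) -> E M [:: 0; 1; 2; 2; 0] [:: 0; 1; 2; 2; 0; 2; 0].
Proof.
rewrite /fins !inE.
case/orP => [/eqP ->|]; first exact: (fin_xyy Hx).
case/orP => [/eqP ->|]; first exact: (fin_yxy Hx).
case/orP => [/eqP ->|]; first exact: (fin_xyxy Hx).
case/orP => [/eqP ->|]; first exact: (fin_xyyx Hx).
case/orP => [/eqP ->|]; first exact: (fin_yxyx Hx).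
case/orP => [/eqP ->|]; first exact: (fin_yyxy Hx).
case/orP => [/eqP ->|]; first exact: (fin_xyxyx Hx).
case/orP => [/eqP ->|]; first exact: (fin_xyyxy Hx).
case/orP => [/eqP ->|]; first exact: (fin_yxyxy Hx).
case/orP => [/eqP ->|]; first exact: (fin_yyxyx Hx).
case/orP => [/eqP ->|]; first exact: (fin_xyxyxy Hx).
case/orP => [/eqP ->|]; first exact: (fin_xyyxyx Hx).
case/orP => [/eqP ->|]; first exact: (fin_yxyxyx Hx).
case/orP => [/eqP ->|]; first exact: (fin_yyxyxy Hx).
case/orP => [/eqP ->|]; first exact: (fin_xyxyxyx Hx).
case/orP => [/eqP ->|]; first exact: (fin_xyyxyxy Hx).
case/orP => [/eqP ->|]; first exact: (fin_yyxyxyx Hx).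
move=> /eqP ->; exact: (fin_xyyxyxyx Hx).
Qed.

Fixpoint lookup (t : seq (word * nat * word)) (s : word) (c : nat) : word :=
  if t is (s', c', r) :: t' then (if (s' == s) && (c' == c) then r else lookup t' s c) else s.
Definition stepw s c := lookup ttable s c.
Definition nf (z : word) : word := foldl stepw [::] z.

Definition le02 (a b : nat) : bool := (a == 2) || (b == 0).
Lemma le02_trans : transitive le02.
Proof. move=> b a c; rewrite /le02 => /orP [->//|/eqP ->] /orP [/eqP //|->]; by rewrite orbT. Qed.

Definition absw (w : word) := (w == [::], 0 \in w, minn (count_mem 2 w) 2, sorted le02 w, last 0 w).
Definition gabs (x : bool * bool * nat * bool * nat) (c : nat) :=
  let '(e, h0, c2, so, l) := x in (false, h0 || (c == 0), minn (c2 + (c == 2)) 2, so && (e || le02 l c), c).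

Lemma absw_rcons w c : absw (rcons w c) = gabs (absw w) c.
Proof.
rewrite /absw /gabs.
have -> : (rcons w c == [::]) = false by case: w.
rewrite mem_rcons in_cons last_rcons -cats1 count_cat /= addn0.
have -> : minn (minn (count_mem 2 w) 2 + (c == 2)) 2 = minn (count_mem 2 w + (c == 2)) 2.
  by case: (c == 2) => /=; lia.
rewrite cats1 [(0 == c)]eq_sym orbC.
case: w => [|a w] //=. by rewrite rcons_path.
Qed.

Lemma states_ok : all (fun s => all (fun c => ((s, c, stepw s c) \in ttable) && (stepw s c \in states) && (absw (stepw s c) == gabs (absw s) c)) [:: 0; 2]) states.
Proof. by vm_compute. Qed.

Lemma nf_spec (M : monoid) (Hx : E M [:: 0; 1; 0] [:: 0; 1; 0; 0]) z :
  all (mem [:: 0; 2]) z ->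
  [/\ nf z \in states, absw (nf z) = absw z & E M (0 :: 1 :: z) (0 :: 1 :: nf z)].
Proof.
elim/last_ind: z => [|z c IH]; first by split => //; exact: E_refl.
rewrite all_rcons => /andP [Hc Hz]. have [H1 H2 H3] := IH Hz.
have := allP states_ok _ H1 => /allP /(_ c Hc) /andP [/andP [Ht Hs] /eqP Ha].
rewrite /nf foldl_rcons -/(nf z). split => //.
- by rewrite Ha absw_rcons H2.
- apply: E_trans (trans_all Hx Ht).
  rewrite -!cats1. exact: (E_ctx [::] [:: c] H3).
Qed.

Lemma fins_ok : all (fun s => (~~ sorted le02 s) && (minn (count_mem 2 s) 2 == 2) ==> (s \in fins)) states.
Proof. by vm_compute. Qed.

Lemma F_final (M : monoid) (Hx : E M [:: 0; 1; 0] [:: 0; 1; 0; 0]) z :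
  all (mem [:: 0; 2]) z -> ~~ sorted le02 z -> 1 < count_mem 2 z ->
  E M [:: 0; 1; 2; 2; 0] (0 :: 1 :: z) -> E M [:: 0; 1; 2; 2; 0] [:: 0; 1; 2; 2; 0; 2; 0].
Proof.
move=> Hz Hs Hc HE. have [H1 H2 H3] := nf_spec Hx Hz.
apply: (fin_all Hx (s := nf z)); last exact: E_trans HE H3.
have := allP fins_ok _ H1 => /implyP; apply.
move: H2; rewrite /absw; case=> _ _ Hc2 Hso _.
rewrite Hso Hs Hc2 /=. by apply/eqP/minn_idPr.
Qed.


Lemma imgw_cat h u v : imgw h (u ++ v) = imgw h u ++ imgw h v.
Proof. by rewrite /imgw map_cat flatten_cat. Qed.

Definition cnt (x : nat) (w : word) : nat := count_mem x w.
Ltac normc :=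
  repeat match goal with
  | H : context [@count ?T (PredOfSimpl.coerce (pred1 ?x)) ?w] |- _ =>
      change (@count T (PredOfSimpl.coerce (pred1 x)) w) with (cnt x w) in H
  | |- context [@count ?T (PredOfSimpl.coerce (pred1 ?x)) ?w] =>
      change (@count T (PredOfSimpl.coerce (pred1 x)) w) with (cnt x w)
  end.
Ltac clia := normc; lia.

Definition hc (c : nat) : nat -> word := fun d => if d == c then [:: 0] else [::].
Definition h12 : nat -> word := fun d => if d == 1 then [:: 1] else if d == 2 then [:: 0] else [::].
Definition h01 : nat -> word := fun d => if d == 0 then [:: 0] else if d == 1 then [:: 1] else [::].

Lemma imgw_hc c w : imgw (hc c) w = nseq (count_mem c w) 0.
Proof. elim: w => [|a w IH] //=. rewrite /imgw /= -/(imgw _ w) IH /hc eq_sym. by case: (c == a). Qed.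

Lemma imgw_h12 w : all (mem [:: 0; 2]) w -> imgw h12 w = nseq (count_mem 2 w) 0.
Proof.
elim: w => [|a w IH] //= /andP [Ha Hw]. rewrite /imgw /= -/(imgw _ w) IH //.
by move: Ha; rewrite !inE => /orP [] /eqP ->.
Qed.

Lemma imgw_h01 w : all (mem [:: 0; 2]) w -> imgw h01 w = nseq (count_mem 0 w) 0.
Proof.
elim: w => [|a w IH] //= /andP [Ha Hw]. rewrite /imgw /= -/(imgw _ w) IH //.
by move: Ha; rewrite !inE => /orP [] /eqP ->.
Qed.

Lemma img_comp (s0 : nat -> option word) h w :
  img (fun c => Some (imgw h (odflt [::] (s0 c)))) w = imgw h (img s0 w).
Proof.
elim: w => [|a w IH] //=. rewrite /img /= imgw_cat. congr (_ ++ _). exact: IH.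
Qed.

Lemma count0_nil (w : word) : (forall x, count_mem x w = 0) -> w = [::].
Proof. case: w => [|a w] // /(_ a) /=. by rewrite eqxx. Qed.

Lemma count_only0 (w : word) : (forall x, x != 0 -> count_mem x w = 0) -> w = nseq (count_mem 0 w) 0.
Proof.
elim: w => [|a w IH] //= H.
have Ea : a = 0.
  apply/eqP; apply: contraT => na. have := H a na. by rewrite /= eqxx.
subst a. rewrite eqxx add1n /= -IH //.
move=> x nx. have := H x nx. by rewrite /= eq_sym (negbTE nx).
Qed.

Lemma cat_min n n' : minn n 2 = minn n' 2 -> (n == 0) = (n' == 0) /\ (1 < n) = (1 < n').
Proof. move=> H; split; lia. Qed.

Lemma lam_nseq n n' : lam (nseq n 0) (nseq n' 0) -> minn n 2 = minn n' 2.
Proof.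
case=> Ht Hm _. have := tau1_mem 0 Ht. rewrite !mem_nseq eqxx !andbT => H1.
have := Hm 0. rewrite /multiple !count_nseq /= !mul1n => H2. lia.
Qed.

Lemma sorted_blocks (w : word) : all (mem [:: 0; 2]) w -> sorted le02 w ->
  w = nseq (count_mem 2 w) 2 ++ nseq (count_mem 0 w) 0.
Proof.
elim: w => [|a w IH] //= /andP [Ha Hw] Hs.
have Hs' : sorted le02 w by apply: path_sorted Hs.
move: Ha; rewrite !inE => /orP [] /eqP Ea; subst a.
- have H2 : count_mem 2 w = 0.
    apply/eqP; rewrite -leqn0 leqNgt -has_count; apply/hasP => [[x xw /eqP Hx]]; subst x.
    have := order_path_min le02_trans Hs. move/allP/(_ 2 xw). by [].
  rewrite H2 /=. by rewrite {1}IH // H2.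
- by rewrite /= {1}IH.
Qed.

Lemma path0_nseq d : path le02 0 (nseq d 0).
Proof. by elim: d. Qed.

Lemma path2_blocks c d : path le02 2 (nseq c 2 ++ nseq d 0).
Proof.
elim: c => [|c IH] /=; last by rewrite IH.
case: d => //= d. exact: path0_nseq.
Qed.

Lemma blocks_sorted c d : sorted le02 (nseq c 2 ++ nseq d 0).
Proof.
case: c => [|c] /=; last exact: path2_blocks.
case: d => //= d. exact: path0_nseq.
Qed.

Lemma subseq_mid (p w s : word) : subseq w (p ++ w ++ s).
Proof.
have := cat_subseq (sub0seq p) (cat_subseq (subseq_refl w) (sub0seq s)).
by rewrite cats0.
Qed.


Lemma redY (M : monoid) (Hx : E M [:: 0; 1; 0] [:: 0; 1; 0; 0]) k w :
  E M (0 :: 1 :: nseq k.+2 2 ++ w) (0 :: 1 :: 2 :: 2 :: w).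
Proof.
elim: k => [|k IH]; first exact: E_refl.
apply: E_trans IH.
exact: (Estep' [:: 0; 1] (nseq k 2 ++ w) [:: [:: 2]; [::]] Hx).
Qed.

Lemma redX (M : monoid) (Hx : E M [:: 0; 1; 0] [:: 0; 1; 0; 0]) m :
  E M (0 :: 1 :: 2 :: 2 :: nseq m.+1 0) [:: 0; 1; 2; 2; 0].
Proof.
elim: m => [|m IH]; first exact: E_refl.
apply: E_trans IH.
exact: (Estep' [::] (nseq m 0) [:: [:: 0]; [:: 1; 2; 2]] Hx).
Qed.

Lemma redXY (M : monoid) (Hx : E M [:: 0; 1; 0] [:: 0; 1; 0; 0]) k m :
  E M (0 :: 1 :: nseq k.+2 2 ++ nseq m.+1 0) [:: 0; 1; 2; 2; 0].
Proof. exact: E_trans (redY Hx k _) (redX Hx m). Qed.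


Lemma letters_sub (L W W' : word) :
  all (mem L) W -> (forall c, minn (count_mem c W) 2 = minn (count_mem c W') 2) ->
  all (mem L) W'.
Proof.
move=> HW CAT. apply/allP => x xW'. apply: contraT => Hn.
have H0 : count_mem x W = 0.
  apply/count_memPn. apply: contra Hn => xW. exact: (allP HW x xW).
have := CAT x. rewrite H0.
have : 0 < count_mem x W' by rewrite -has_count has_pred1.
clia.
Qed.

Lemma all02_T k m : all (mem [:: 0; 2]) (nseq k 2 ++ nseq m 0).
Proof. by rewrite all_cat !all_nseq !inE /= !orbT. Qed.

Lemma count_T x k m : count_mem x (nseq k 2 ++ nseq m 0) = (2 == x) * k + (0 == x) * m.
Proof. by rewrite count_cat !count_nseq. Qed.

Lemma sorted_sub (w w' : word) : subseq w w' -> sorted le02 w' -> sorted le02 w.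
Proof. move=> H1 H2. exact: (subseq_sorted le02_trans H1 H2). Qed.

Lemma lamX_z (z : word) : all (mem [:: 0; 2]) z -> sorted le02 z -> 1 < count_mem 2 z ->
  0 < count_mem 0 z -> lam X (0 :: 1 :: z).
Proof.
move=> Hz Hs H2 H0. rewrite (sorted_blocks Hz Hs).
have [k' Ek] : exists k', count_mem 2 z = k'.+2 by exists (count_mem 2 z - 2); clia.
have [m' Em] : exists m', count_mem 0 z = m'.+1 by exists (count_mem 0 z - 1); clia.
rewrite Ek Em. exact: lamX_blocks.
Qed.

Lemma caseN2 (W W' p2 s : word) k m (G : Prop) :
  (forall c, minn (count_mem c W) 2 = minn (count_mem c W') 2) ->
  p2 ++ W ++ s = nseq k.+2 2 ++ nseq m.+1 0 ->
  (forall z, all (mem [:: 0; 2]) z -> ~~ sorted le02 z -> 1 < count_mem 2 z ->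
     (0 :: 1 :: p2) ++ W' ++ s = 0 :: 1 :: z -> G) ->
  (lam X ((0 :: 1 :: p2) ++ W' ++ s) -> lam W W' -> False) -> G.
Proof.
move=> CAT Heq Hfin Hcon.
have HT := all02_T k.+2 m.+1. rewrite -Heq !all_cat in HT.
case/and3P: HT => Hp2 HW Hs.
have HW' := letters_sub HW CAT.
have Hz : all (mem [:: 0; 2]) (p2 ++ W' ++ s) by rewrite !all_cat Hp2 HW' Hs.
have Hcnt : forall x, count_mem x p2 + count_mem x W + count_mem x s = (2 == x) * k.+2 + (0 == x) * m.+1.
  by move=> x; rewrite -count_T -Heq !count_cat addnA.
have C2 := CAT 2. have C0 := CAT 0. have K2 := Hcnt 2. have K0 := Hcnt 0.
rewrite /= in K2 K0.
have Hc2 : 1 < count_mem 2 (p2 ++ W' ++ s) by rewrite !count_cat; clia.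
case: (boolP (sorted le02 (p2 ++ W' ++ s))) => Hso; last by apply: (Hfin _ Hz Hso Hc2).
exfalso. apply: Hcon.
- apply: lamX_z => //. rewrite !count_cat; clia.
- have HsT : sorted le02 (p2 ++ W ++ s) by rewrite Heq; apply: blocks_sorted.
  have HsW := sorted_sub (subseq_mid p2 W s) HsT.
  have HsW' := sorted_sub (subseq_mid p2 W' s) Hso.
  rewrite (sorted_blocks HW HsW) (sorted_blocks HW' HsW').
  have := @lam_blocks [::] (count_mem 2 W) (count_mem 0 W) (count_mem 2 W') (count_mem 0 W') isT C2.
  apply => //=; clia.
Qed.


Lemma all012_02 (w : word) : all (mem [:: 0; 1; 2]) w -> count_mem 1 w = 0 -> all (mem [:: 0; 2]) w.
Proof.
move=> H /count_memPn H1. apply/allP => x xw. have := allP H x xw. rewrite !inE.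
case/or3P => /eqP Ex; subst x; rewrite ?eqxx ?orbT //. by rewrite xw in H1.
Qed.

Lemma imgw_h12_0 n : imgw h12 (nseq n 0) = [::].
Proof. by elim: n. Qed.
Lemma imgw_h01_0 n : imgw h01 (nseq n 0) = nseq n 0.
Proof. elim: n => [|n IH] //. by rewrite /imgw /= -/(imgw h01 _) IH. Qed.

Lemma lam_at_inv n d e : ~ lam (0 :: 1 :: nseq d 0) (nseq n.+2 0 ++ 1 :: nseq e 0).
Proof.
case=> _ Hm Ha. have H0 : multiple (0 :: 1 :: nseq d 0) 0.
  by rewrite Hm /multiple count_nseq_cat /= mul1n.
have := Ha 0 H0. by rewrite /first_two_adj /=.
Qed.

Lemma caseT (W W' W2 s : word) a k m (G : Prop) :
  a <= 1 -> W = nseq a 0 ++ 1 :: W2 -> W2 ++ s = nseq k.+2 2 ++ nseq m.+1 0 ->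
  (forall c, minn (count_mem c W) 2 = minn (count_mem c W') 2) ->
  (forall h, allowed [:: ata] (imgw h W) -> allowed [:: ata] (imgw h W') /\ lam (imgw h W) (imgw h W')) ->
  (forall z, all (mem [:: 0; 2]) z -> ~~ sorted le02 z -> 1 < count_mem 2 z ->
     nseq (1 - a) 0 ++ W' ++ s = 0 :: 1 :: z -> G) ->
  (lam X (nseq (1 - a) 0 ++ W' ++ s) -> lam W W' -> False) -> G.
Proof.
move=> Ha EW Heq CAT Htr Hfin Hcon.
have HT := all02_T k.+2 m.+1. rewrite -Heq all_cat in HT. case/andP: HT => HW2 Hs.
have HW : all (mem [:: 0; 1; 2]) W.
  rewrite EW all_cat all_nseq /= inE eqxx /= orbT. apply/allP => x /(allP HW2).
  by rewrite !inE => /orP [] ->; rewrite ?orbT.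
have HW' := letters_sub HW CAT.
have c1W2 : count_mem 1 W2 = 0.
  apply/count_memPn. apply/negP => /(allP HW2). by [].
have C1 := CAT 1. rewrite EW count_cat count_nseq /= c1W2 in C1.
have c1W' : count_mem 1 W' = 1 by clia.
have [A [B EW']] : exists A B, W' = A ++ 1 :: B.
  have : 1 \in W' by rewrite -has_pred1 has_count c1W'.
  case/splitPr => A B. by exists A, B.
subst W'.
move: c1W'; rewrite count_cat /= ?eqxx => c1AB.
have c1A : count_mem 1 A = 0 by clia.
have c1B : count_mem 1 B = 0 by clia.
move: HW'; rewrite all_cat => /andP [HA /andP [_ HB]].
have HA2 := all012_02 HA c1A. have HB2 := all012_02 HB c1B.
have I12 : imgw h12 W = 1 :: nseq (count_mem 2 W2) 0.
  rewrite EW imgw_cat.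
  rewrite imgw_h12_0.
  by rewrite /imgw /= -/(imgw h12 W2) imgw_h12.
have [_ L12] := Htr h12 (eq_ind_r _ (allowed_t _) I12).
move: L12; rewrite I12 imgw_cat imgw_h12 //.
rewrite [imgw h12 (1 :: B)]/imgw /= -/(imgw h12 B) imgw_h12 //.
case=> /tau1_ohead. case E2A: (count_mem 2 A) => [|n] //= _ _ _.
have EA : A = nseq (count_mem 0 A) 0.
  apply: count_only0 => x nx. case: (x =P 2) => [->//|n2].
  apply/count_memPn. apply/negP => /(allP HA2). rewrite !inE.
  by case/orP => /eqP Ex; [move: nx|move: n2]; rewrite Ex.
have I01 : imgw h01 W = nseq a 0 ++ 1 :: nseq (count_mem 0 W2) 0.
  rewrite EW imgw_cat.
  rewrite imgw_h01_0.
  by rewrite /imgw /= -/(imgw h01 W2) imgw_h01.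
have AL01 : allowed [:: ata] (imgw h01 W).
  rewrite I01. have [->|->] : a = 0 \/ a = 1 by lia.
  - exact: allowed_t.
  - exact: allowed_at.
have [_ L01] := Htr h01 AL01.
move: L01; rewrite I01 imgw_cat imgw_h01 //.
rewrite [imgw h01 (1 :: B)]/imgw /= -/(imgw h01 B) imgw_h01 // => L01.
have EA' : A = nseq a 0.
  rewrite EA. have Ea01 : (a = 0) \/ (a = 1) by lia.
  case: Ea01 => Ea; rewrite Ea in L01 *.
  - move: L01 => [/tau1_ohead]. by case: (count_mem 0 A).
  - move: L01. case E0: (count_mem 0 A) => [|[|n]] //.
    + by case=> /tau1_ohead.
    + by move/lam_at_inv.
subst A. clear EA E2A L01 I01 AL01 I12 HA HA2 c1A.
have EZ : nseq (1 - a) 0 ++ (nseq a 0 ++ 1 :: B) ++ s = 0 :: 1 :: (B ++ s).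
  by have [->|->] : a = 0 \/ a = 1 by lia.
have Hz : all (mem [:: 0; 2]) (B ++ s) by rewrite all_cat HB2 Hs.
have Hcnt : forall x, count_mem x W2 + count_mem x s = (2 == x) * k.+2 + (0 == x) * m.+1.
  by move=> x; rewrite -count_T -Heq !count_cat.
have C2 := CAT 2. have C0 := CAT 0. have K2 := Hcnt 2. have K0 := Hcnt 0.
rewrite /= in K2 K0.
rewrite EW !count_cat !count_nseq /= in C2 C0.
have Hc2 : 1 < count_mem 2 (B ++ s) by rewrite count_cat; clia.
case: (boolP (sorted le02 (B ++ s))) => Hso; last by apply: (Hfin _ Hz Hso Hc2).
exfalso. apply: Hcon.
- rewrite EZ. apply: lamX_z => //. rewrite count_cat.
  have Ea01 : (a = 0) \/ (a = 1) by lia.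
  case: Ea01 => Ea; rewrite Ea in C0; clia.
- have HsT : sorted le02 (W2 ++ s) by rewrite Heq; apply: blocks_sorted.
  have HsW := sorted_sub (subseq_mid [::] W2 s) HsT.
  have HsB := sorted_sub (subseq_mid [::] B s) Hso.
  rewrite EW (sorted_blocks HW2 HsW) (sorted_blocks HB2 HsB).
  have Ea01 : (a = 0) \/ (a = 1) by lia.
  case: Ea01 => Ea; rewrite Ea in C0 C2 *.
  + have := @lam_blocks [:: 1] (count_mem 2 W2) (count_mem 0 W2) (count_mem 2 B) (count_mem 0 B) isT.
    apply => /=; clia.
  + have := @lam_blocks [:: 0; 1] (count_mem 2 W2) (count_mem 0 W2) (count_mem 2 B) (count_mem 0 B) isT.
    apply => /=; clia.
Qed.


Lemma main (M : monoid) (u v : word) (s0 : nat -> option word) :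
  E M [:: 0; 1; 0] [:: 0; 1; 0; 0] -> E M u v -> Mlam_sat [:: ata] (u, v) ->
  nonzero [:: X] s0 u -> ~ (nonzero [:: X] s0 v /\ lam (img s0 u) (img s0 v)) ->
  E M [:: 0; 1; 2; 2; 0] [:: 0; 1; 2; 2; 0; 2; 0].
Proof.
move=> Hx Huv Hat [Hu HaU] Hfail.
have Ei : forall c w, img (fun d => Some (hc c d)) w = nseq (count_mem c w) 0.
  by move=> c w; rewrite -imgw_hc.
have Hv : forall x, x \in v -> s0 x <> None.
  move=> c cv Hc.
  have cu : c \notin u by apply/negP => cu'; exact: Hu c cu' Hc.
  have c0 : count_mem c u = 0 by apply/count_memPn.
  have c1 : 0 < count_mem c v by rewrite -has_count has_pred1.
  case: (Hat (fun d => Some (hc c d))); rewrite /nonzero /= !Ei c0.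
  - case=> H1 _. apply: H1; split => //. exact: allowed_nseq.
  - case=> _ _ [Ht _ _]. have := tau1_mem 0 Ht. rewrite !mem_nseq /=.
    by case: (count_mem c v) c1.
have Htr : forall h, allowed [:: ata] (imgw h (img s0 u)) ->
    allowed [:: ata] (imgw h (img s0 v)) /\ lam (imgw h (img s0 u)) (imgw h (img s0 v)).
  move=> h HA. case: (Hat (fun c => Some (imgw h (odflt [::] (s0 c))))); rewrite /nonzero /= !img_comp.
  - case=> H1 _. exfalso; apply: H1; split => //.
  - by case=> _ [_ H2] H3.
have CAT : forall c, minn (count_mem c (img s0 u)) 2 = minn (count_mem c (img s0 v)) 2.
  move=> c. have := Htr (hc c). rewrite !imgw_hc => /(_ (allowed_nseq _)) [_ Hl].
  exact: lam_nseq.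
have contra : forall p s, lam X (p ++ img s0 v ++ s) -> lam (img s0 u) (img s0 v) -> False.
  move=> p s HX Hl. apply: Hfail; split => //. split => //. exists X; first by rewrite inE.
  by exists p, s.
case: HaU => x; rewrite inE => /eqP -> [p [s HX]].
have [k [m Hsh]] := lamX_shape HX.
have HE : E M (p ++ img s0 u ++ s) (p ++ img s0 v ++ s).
  exact: (E_ctx p s (E_sub (fun c => odflt [::] (s0 c)) Huv)).
have fin : forall z, all (mem [:: 0; 2]) z -> ~~ sorted le02 z -> 1 < count_mem 2 z ->
    p ++ img s0 v ++ s = 0 :: 1 :: z -> E M [:: 0; 1; 2; 2; 0] [:: 0; 1; 2; 2; 0; 2; 0].
  move=> z Hz Hs Hc Ez. apply: (F_final Hx Hz Hs Hc).
  apply: E_trans (E_sym (redXY Hx k m)) _. rewrite -Hsh -Ez. exact: HE.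
have same : img s0 v = img s0 u -> False.
  move=> Eq. apply: (contra p s); rewrite Eq //. exact: lam_refl.
move: (img s0 u) (img s0 v) Hsh HE fin contra same CAT Htr HX => W W' Hsh HE fin contra same CAT Htr HX.
case: p Hsh HE fin contra HX => [|a p] Hsh HE fin contra HX.
- case: W Hsh HE contra HX CAT Htr same => [|b W] /= Hsh HE contra HX CAT Htr same.
  + exfalso; apply: same. apply: count0_nil => c. have := CAT c. rewrite /=. clia.
  + case: Hsh => Eb Hsh; subst b.
    case: W Hsh HE contra HX CAT Htr same => [|b W] /= Hsh HE contra HX CAT Htr same.
    * exfalso; apply: same. rewrite (count_only0 (w := W')).
      - have := CAT 0. rewrite /= => H. have -> : count_mem 0 W' = 1 by clia. by [].
      - move=> c nc. have := CAT c. rewrite /= eq_sym (negbTE nc) /=. clia.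
    * case: Hsh => Eb Hsh; subst b.
      apply: (caseT (a := 1) (W2 := W) (k := k) (m := m) isT erefl Hsh CAT Htr).
      - by move=> z Hz Hs Hc Ez; apply: (fin z).
      - exact: (contra [::] s).
- case: Hsh => Ea Hsh; subst a.
  case: p Hsh HE fin contra HX => [|a p] Hsh HE fin contra HX.
  + case: W Hsh HE contra HX CAT Htr same => [|b W] /= Hsh HE contra HX CAT Htr same.
    * exfalso; apply: same. apply: count0_nil => c. have := CAT c. rewrite /=. clia.
    * case: Hsh => Eb Hsh; subst b.
      apply: (caseT (a := 0) (W2 := W) (k := k) (m := m) isT erefl Hsh CAT Htr).
      - by move=> z Hz Hs Hc Ez; apply: (fin z).
      - exact: (contra [:: 0] s).
  + case: Hsh => Ea Hsh; subst a.
    apply: (caseN2 CAT Hsh).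
    - by move=> z Hz Hs Hc Ez; apply: (fin z).
    - exact: (contra (0 :: 1 :: p) s).
Qed.


Lemma Mlam_swap (Wl : seq word) u v : Mlam_sat Wl (u, v) -> Mlam_sat Wl (v, u).
Proof.
move=> H s. case: (H s) => /= [[H1 H2]|[H1 H2 H3]]; [left|right] => //.
split => //. exact: lam_sym.
Qed.

Theorem lemma4p3 (Sigma : identity -> Prop) :
  Vsat Sigma ([:: 0; 1; 0], [:: 0; 1; 0; 0]) ->
  Vcontains_Mlam Sigma [:: [:: 0; 1; 0]] ->
  ~ Vcontains_Mlam Sigma [:: [:: 0; 1; 2; 2; 0]] ->
  Vsat Sigma ([:: 0; 1; 2; 2; 0], [:: 0; 1; 2; 2; 0; 2; 0]).
Proof.
move=> H1 H2 H3 M HM.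
have Hx : E M [:: 0; 1; 0] [:: 0; 1; 0; 0] := H1 M HM.
have [f [Hf Hnot]] : exists f, Sigma f /\ ~ Mlam_sat [:: X] f.
  apply: NNPP => Hn. apply: H3 => f Hf. apply: NNPP => Hm. apply: Hn. by exists f.
have [s0 Hs0] := not_all_ex_not _ _ Hnot.
case: f Hf Hnot Hs0 => u v Hf _ Hs0.
have Hat : Mlam_sat [:: ata] (u, v) := H2 _ Hf.
have Huv : E M u v := HM _ Hf.
change (E M [:: 0; 1; 2; 2; 0] [:: 0; 1; 2; 2; 0; 2; 0]).
case: (classic (nonzero [:: X] s0 u)) => Hnu.
- apply: (main Hx Huv Hat Hnu). move=> [Hnv Hl]. apply: Hs0; right; by split.
- case: (classic (nonzero [:: X] s0 v)) => Hnv; last by exfalso; apply: Hs0; left.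
  apply: (main Hx (E_sym Huv) (Mlam_swap Hat) Hnv). move=> [Hnu' Hl].
  apply: Hs0; right; split => //; exact: lam_sym.
Qed.
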